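(* Let $k\ge 0$. (a) If $u\in\mathcal P_k^\perp(K)$ satisfies $u|_e=0$ on some face $e\in\mathcal E(K)$, then $u=0$. (b) If $\mathbf q\in\boldsymbol{\mathcal P}_k^\perp(K)$ satisfies $\mathbf q\cdot\mathbf n=0$ on $\partial K$, then $\mathbf q=\mathbf 0$.
   Context: $K\subset\mathbb R^d$ ($d\in\{2,3\}$) is a nondegenerate triangle/tetrahedron with outward unit normal $\mathbf n$ and set of faces (edges if $d=2$) $\mathcal E(K)$. $\mathcal P_k(K)$ denotes polynomials of total degree at most $k$ on $K$, with $\mathcal P_{-1}(K)=\{0\}$. $(\cdot,\cdot)_K$ is the $L^2(K)$ inner product. $\mathcal P_k^\perp(K)=\{u\in\mathcal P_k(K):(u,v)_K=0\ \forall v\in\mathcal P_{k-1}(K)\}$ and $\boldsymbol{\mathcal P}_k^\perp(K)=\mathcal P_k^\perp(K)^d$. *)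

(* Defs.v *)
From Stdlib Require Import Reals Lra Lia List ClassicalEpsilon.
Open Scope R_scope.

(* Points of R^d are represented as functions nat -> R; only the
   coordinates 0..d-1 are meaningful. *)

Fixpoint rsum (n : nat) (f : nat -> R) : R :=
  match n with O => 0 | S m => rsum m f + f m end.

Definition dot (d : nat) (a b : nat -> R) : R := rsum d (fun j => a j * b j).

(* monomial x^alpha, alpha given as the list of exponents starting at
   coordinate i *)
Fixpoint mono_from (a : list nat) (i : nat) (x : nat -> R) : R :=
  match a with
  | nil => 1
  | ai :: a' => x i ^ ai * mono_from a' (S i) x
  end.

Definition mono (a : list nat) (x : nat -> R) : R := mono_from a 0 x.

Definition eval_terms (l : list (R * list nat)) (x : nat -> R) : R :=
  fold_right (fun p acc => fst p * mono (snd p) x + acc) 0 l.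

Definition is_poly (d k : nat) (f : (nat -> R) -> R) : Prop :=
  exists l : list (R * list nat),
    Forall (fun p => length (snd p) = d /\ (list_sum (snd p) <= k)%nat) l /\
    forall x, f x = eval_terms l x.

(* P_{k-1}, with the convention P_{-1} = {0} *)
Definition is_poly_prev (d k : nat) (v : (nat -> R) -> R) : Prop :=
  match k with
  | O => forall x, v x = 0
  | S j => is_poly d j v
  end.

Definition in_simplex (d : nat) (V : nat -> nat -> R) (x : nat -> R) : Prop :=
  exists lam : nat -> R,
    (forall i, (i <= d)%nat -> 0 <= lam i) /\
    rsum (S d) lam = 1 /\
    forall j, (j < d)%nat -> x j = rsum (S d) (fun i => lam i * V i j).

Definition in_face (d : nat) (V : nat -> nat -> R) (i : nat) (x : nat -> R) : Prop :=
  exists lam : nat -> R,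
    (forall l, (l <= d)%nat -> 0 <= lam l) /\
    lam i = 0 /\
    rsum (S d) lam = 1 /\
    forall j, (j < d)%nat -> x j = rsum (S d) (fun l => lam l * V l j).

Definition nondegenerate (d : nat) (V : nat -> nat -> R) : Prop :=
  forall lam : nat -> R,
    rsum (S d) lam = 0 ->
    (forall j, (j < d)%nat -> rsum (S d) (fun i => lam i * V i j) = 0) ->
    forall i, (i <= d)%nat -> lam i = 0.

Definition outward_unit_normal (d : nat) (V : nat -> nat -> R) (i : nat)
  (n : nat -> R) : Prop :=
  dot d n n = 1 /\
  (forall j l, (j <= d)%nat -> (l <= d)%nat -> j <> i -> l <> i ->
     dot d n (fun c => V j c - V l c) = 0) /\
  (forall j, (j <= d)%nat -> j <> i -> dot d n (fun c => V i c - V j c) < 0).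

(* total version of the 1D Riemann integral (0 if not integrable) *)
Definition RInt_tot (f : R -> R) (a b : R) : R :=
  match excluded_middle_informative (inhabited (Riemann_integrable f a b)) with
  | left h => RiemannInt (epsilon h (fun _ => True))
  | right _ => 0
  end.

Definition upd (x : nat -> R) (m : nat) (t : R) : nat -> R :=
  fun c => if Nat.eqb c m then t else x c.

Fixpoint int_box (M : R) (n : nat) (F : (nat -> R) -> R) : R :=
  match n with
  | O => F (fun _ => 0)
  | S m => RInt_tot (fun t => int_box M m (fun x => F (upd x m t))) (- M) M
  end.

Definition indK (d : nat) (V : nat -> nat -> R) (x : nat -> R) : R :=
  match excluded_middle_informative (in_simplex d V x) with
  | left _ => 1
  | right _ => 0
  end.

(* a box [-M,M]^d containing K *)
Definition bound (d : nat) (V : nat -> nat -> R) : R :=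
  1 + rsum (S d) (fun i => rsum d (fun j => Rabs (V i j))).

Definition ipK (d : nat) (V : nat -> nat -> R) (u v : (nat -> R) -> R) : R :=
  int_box (bound d V) d (fun x => indK d V x * (u x * v x)).

Definition Pperp (d : nat) (V : nat -> nat -> R) (k : nat) (u : (nat -> R) -> R) : Prop :=
  is_poly d k u /\ forall v, is_poly_prev d k v -> ipK d V u v = 0.

(* Main.v *)
Require Import Defs.
From Stdlib Require Import Reals Lra Lia List FunctionalExtensionality ClassicalEpsilon.
From mathcomp Require all_boot all_algebra Rstruct.
Open Scope R_scope.

Definition aff (c0 : R) (c : nat -> R) (d : nat) (x : nat -> R) : R :=
  c0 + rsum d (fun j => c j * x j).

Module LA.
Import all_boot all_algebra Rstruct.
Import GRing.Theory.
Local Open Scope ring_scope.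

Lemma rsum_big n (f : nat -> R) : rsum n f = \sum_(i < n) f i.
Proof.
elim: n => [|n IH] /=; first by rewrite big_ord0.
by rewrite big_ord_recr /= IH RplusE.
Qed.

Lemma bary_exists (d : nat) (V : nat -> nat -> R) : Defs.nondegenerate d V ->
  exists (c0 : nat -> R) (c : nat -> nat -> R),
  (forall l m, Peano.le l d -> Peano.le m d -> aff (c0 l) (c l) d (V m) = if Nat.eqb l m then 1%R else 0%R) /\
  (forall x, rsum (S d) (fun l => aff (c0 l) (c l) d x) = 1%R) /\
  (forall x j, Peano.lt j d -> rsum (S d) (fun l => (aff (c0 l) (c l) d x * V l j)%R) = x j).
Proof.
move=> nd.
pose X (x : nat -> R) : 'rV[R]_(d.+1) := \row_(i < d.+1) (if (i : nat) == 0%N then 1 else x (i.-1)).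
pose A : 'M[R]_(d.+1) := \matrix_(m < d.+1) X (V m).
have fA : row_free A.
  apply: inj_row_free => v vA.
  pose lam (m : nat) : R := if (m < d.+1)%N then v 0 (inord m) else 0.
  have key : forall i : 'I_d.+1, \sum_(m < d.+1) lam m * (if (i : nat) == 0%N then 1 else V m i.-1) = 0.
    move=> i.
    have := congr1 (fun M : 'M[R]_(1, d.+1) => M 0 i) vA; rewrite !mxE => e.
    rewrite -[X in _ = X]e; apply: eq_bigr => m _; rewrite /lam ltn_ord inord_val !mxE //.
  have H0 := key ord0; rewrite /= in H0.
  have Hl := nd lam.
  have e1 : rsum (S d) lam = 0.
    rewrite rsum_big -[X in _ = X]H0; apply: eq_bigr => m _; by rewrite mulr1.
  have e2 : forall j, Peano.lt j d -> rsum (S d) (fun i => (lam i * V i j)%R) = 0.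
    move=> j /ltP jd.
    have := key (inord j.+1); rewrite inordK; last by rewrite ltnS.
    move=> e; rewrite /= in e; rewrite rsum_big -[X in _ = X]e; apply: eq_bigr => m _; done.
  apply/matrixP => i m; rewrite (ord1 i) mxE.
  have := Hl e1 e2 m; rewrite /lam ltn_ord inord_val; apply.
  by apply/leP; rewrite -ltnS.
have uA : A \in unitmx by rewrite -row_free_unit.
pose B := invmx A.
pose lamx (x : nat -> R) : 'rV[R]_(d.+1) := X x *m B.
exists (fun l => B 0 (inord l)), (fun l j => B (inord j.+1) (inord l)).
have affE : forall l x, aff (B 0 (inord l)) (fun j => B (inord j.+1) (inord l)) d x = lamx x 0 (inord l).
  move=> l x; rewrite /aff /lamx mxE big_ord_recl !mxE /= mul1r RplusE rsum_big.
  congr (_ + _); apply: eq_bigr => i _; rewrite !mxE /= RmultE mulrC; congr (_ * _).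
  by congr (B _ _); apply: val_inj; rewrite /= inordK // ltnS.
have XA : forall m : 'I_d.+1, X (V m) = row m A by move=> m; rewrite rowK.
split; [|split].
- move=> l m /leP ld /leP md; rewrite affE.
  have -> : V m = V (inord m : 'I_d.+1) by rewrite inordK.
  rewrite /lamx XA -row_mul mulmxV // !mxE.
  rewrite -(inj_eq val_inj) /= !inordK ?ltnS //.
  by case: (Nat.eqb_spec l m) => [->|/eqP]; rewrite ?eqxx // eq_sym => /negbTE ->.
- move=> x; rewrite rsum_big.
  have : lamx x *m A = X x by rewrite /lamx -mulmxA mulVmx // mulmx1.
  move=> /(congr1 (fun M : 'M[R]_(1, d.+1) => M 0 ord0)); rewrite !mxE /= => <-.
  apply: eq_bigr => l _; rewrite affE !mxE inord_val mulr1 //.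
- move=> x j /ltP jd; rewrite rsum_big.
  have : lamx x *m A = X x by rewrite /lamx -mulmxA mulVmx // mulmx1.
  move=> e; transitivity ((lamx x *m A) 0 (inord j.+1)); last by rewrite e !mxE inordK.
  rewrite mxE; apply: eq_bigr => l _; rewrite affE !mxE inord_val inordK //.
Qed.
End LA.


Lemma rsum_ext n f g : (forall j, (j < n)%nat -> f j = g j) -> rsum n f = rsum n g.
Proof. induction n; simpl; intros H; auto. rewrite IHn by (intros; apply H; lia). rewrite H by lia. auto. Qed.

Lemma rsum_plus n f g : rsum n (fun j => f j + g j) = rsum n f + rsum n g.
Proof. induction n; simpl; [lra|]. rewrite IHn. lra. Qed.

Lemma rsum_scal n c f : rsum n (fun j => c * f j) = c * rsum n f.
Proof. induction n; simpl; [lra|]. rewrite IHn. lra. Qed.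

Lemma rsum_zero n : rsum n (fun _ => 0) = 0.
Proof. induction n; simpl; [lra|]. rewrite IHn. lra. Qed.

Lemma rsum_minus n f g : rsum n (fun j => f j - g j) = rsum n f - rsum n g.
Proof. induction n; simpl; [lra|]. rewrite IHn. lra. Qed.

Lemma rsum_change n f g m : (m < n)%nat -> (forall j, j <> m -> f j = g j) ->
  rsum n f = rsum n g + (f m - g m).
Proof.
  induction n; intros Hm H; [lia|]. simpl.
  destruct (Nat.eq_dec n m) as [E|Hn].
  - subst m.
    rewrite (rsum_ext n f g) by (let j := fresh in intros j Hj; apply H; lia). lra.
  - rewrite IHn by (auto; lia). rewrite (H n) by auto. lra.
Qed.

Lemma rsum_le n f g : (forall j, (j < n)%nat -> f j <= g j) -> rsum n f <= rsum n g.
Proof. induction n; simpl; intros H; [lra|]. specialize (IHn (fun j Hj => H j ltac:(lia))). specialize (H n ltac:(lia)). lra. Qed.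

Lemma rsum_abs n f : Rabs (rsum n f) <= rsum n (fun j => Rabs (f j)).
Proof. induction n; simpl. rewrite Rabs_R0; lra. eapply Rle_trans; [apply Rabs_triang|]. lra. Qed.

Lemma rsum_nonneg n f : (forall j, (j < n)%nat -> 0 <= f j) -> 0 <= rsum n f.
Proof. intros H. rewrite <- (rsum_zero n). apply rsum_le. auto. Qed.

Lemma rsum_zero_each n f : (forall j, (j < n)%nat -> 0 <= f j) -> rsum n f = 0 ->
  forall j, (j < n)%nat -> f j = 0.
Proof.
  induction n; intros H0 Hs j Hj; [lia|]. simpl in Hs.
  assert (A := rsum_nonneg n f (fun j Hj => H0 j ltac:(lia))).
  assert (B := H0 n ltac:(lia)).
  destruct (Nat.eq_dec j n) as [->|]; [lra|].
  apply IHn; auto; try lra. lia.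
Qed.

Lemma upd_eq x m t : upd x m t m = t.
Proof. unfold upd. rewrite Nat.eqb_refl. auto. Qed.
Lemma upd_neq x m t j : j <> m -> upd x m t j = x j.
Proof. intros H. unfold upd. apply Nat.eqb_neq in H. rewrite H. auto. Qed.
Lemma upd_same x m : upd x m (x m) = x.
Proof. extensionality j. unfold upd. destruct (Nat.eqb_spec j m); subst; auto. Qed.
Lemma upd_upd x m t s : upd (upd x m t) m s = upd x m s.
Proof. extensionality j. unfold upd. destruct (Nat.eqb j m); auto. Qed.

Lemma eval_app l1 l2 x : eval_terms (l1 ++ l2) x = eval_terms l1 x + eval_terms l2 x.
Proof. induction l1; simpl; [lra|]. rewrite IHl1. lra. Qed.

Definition polyl (d k : nat) (l : list (R * list nat)) :=
  Forall (fun p => length (snd p) = d /\ (list_sum (snd p) <= k)%nat) l.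

Lemma polyl_mono d k k' l : (k <= k')%nat -> polyl d k l -> polyl d k' l.
Proof. intros Hk H. eapply Forall_impl; [|exact H]. simpl. intros a [? ?]; split; auto; lia. Qed.

Lemma poly_ext d k f g : is_poly d k f -> (forall x, f x = g x) -> is_poly d k g.
Proof. intros [l [Hl Hf]] H. exists l. split; auto. intros x. rewrite <- H. auto. Qed.

Lemma poly_mono d k k' f : (k <= k')%nat -> is_poly d k f -> is_poly d k' f.
Proof. intros Hk [l [Hl Hf]]. exists l. split; auto. eapply polyl_mono; eauto. Qed.

Lemma poly_zero d k : is_poly d k (fun _ => 0).
Proof. exists nil. split; auto. Qed.

Lemma mono_from_zeros n i x : mono_from (repeat 0%nat n) i x = 1.
Proof. revert i; induction n; intros i; simpl; auto. rewrite IHn. lra. Qed.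

Lemma list_sum_repeat0 n : list_sum (repeat 0%nat n) = 0%nat.
Proof. induction n; simpl; auto. Qed.

Lemma poly_const d c : is_poly d 0 (fun _ => c).
Proof.
  exists ((c, repeat 0%nat d) :: nil). split.
  - constructor; auto. simpl. rewrite repeat_length, list_sum_repeat0. auto.
  - intros x. simpl. unfold mono. rewrite mono_from_zeros. lra.
Qed.

Lemma poly_add d k f g : is_poly d k f -> is_poly d k g -> is_poly d k (fun x => f x + g x).
Proof.
  intros [l1 [H1 F1]] [l2 [H2 F2]]. exists (l1 ++ l2). split.
  - apply Forall_app; auto.
  - intros x. rewrite eval_app, F1, F2. auto.
Qed.

Lemma poly_scal d k c f : is_poly d k f -> is_poly d k (fun x => c * f x).
Proof.
  intros [l [H F]]. exists (map (fun p => (c * fst p, snd p)) l). split.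
  - apply Forall_map. eapply Forall_impl; [|exact H]. simpl. auto.
  - intros x. rewrite F. clear. induction l; simpl; [lra|]. rewrite <- IHl. ring.
Qed.

Fixpoint zipadd (a b : list nat) : list nat :=
  match a, b with
  | x :: a', y :: b' => (x + y)%nat :: zipadd a' b'
  | _, _ => nil
  end.

Lemma zipadd_len a b : length a = length b -> length (zipadd a b) = length a.
Proof. revert b; induction a; intros [|y b] H; simpl in *; auto; lia. Qed.

Lemma zipadd_sum a b : length a = length b -> list_sum (zipadd a b) = (list_sum a + list_sum b)%nat.
Proof. revert b; induction a; intros [|y b] H; simpl in *; try lia. rewrite IHa by lia. lia. Qed.

Lemma zipadd_mono a b i x : length a = length b ->
  mono_from (zipadd a b) i x = mono_from a i x * mono_from b i x.
Proof.
  revert b i; induction a; intros [|y b] i H; simpl in *; try lia; try lra.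
  rewrite IHa by lia. rewrite pow_add. lra.
Qed.

Definition pmul (l1 l2 : list (R * list nat)) :=
  flat_map (fun p => map (fun q => (fst p * fst q, zipadd (snd p) (snd q))) l2) l1.

Lemma eval_pmul d l1 l2 x : Forall (fun p => length (snd p) = d) l1 -> Forall (fun p => length (snd p) = d) l2 ->
  eval_terms (pmul l1 l2) x = eval_terms l1 x * eval_terms l2 x.
Proof.
  intros H1 H2. induction l1 as [|p l1 IH]; simpl; [lra|].
  inversion H1; subst. rewrite eval_app, IH by auto.
  assert (E : eval_terms (map (fun q => (fst p * fst q, zipadd (snd p) (snd q))) l2) x
     = fst p * mono (snd p) x * eval_terms l2 x).
  { clear IH H1 H4. induction l2 as [|q l2 IH2]; simpl; [lra|]. inversion H2; subst.
    rewrite IH2 by auto. unfold mono. rewrite zipadd_mono by congruence. lra. }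
  rewrite E. lra.
Qed.

Lemma poly_mul d a b f g : is_poly d a f -> is_poly d b g -> is_poly d (a + b) (fun x => f x * g x).
Proof.
  intros [l1 [H1 F1]] [l2 [H2 F2]]. exists (pmul l1 l2). split.
  - unfold pmul. apply Forall_flat_map. eapply Forall_impl; [|exact H1]. intros p [Hp1 Hp2].
    apply Forall_map. eapply Forall_impl; [|exact H2]. intros q [Hq1 Hq2]. simpl.
    rewrite zipadd_len, zipadd_sum by congruence. split; lia.
  - intros x. rewrite F1, F2. symmetry. apply eval_pmul with d.
    + eapply Forall_impl; [|exact H1]. simpl. tauto.
    + eapply Forall_impl; [|exact H2]. simpl. tauto.
Qed.

Lemma poly_pow d f n : is_poly d 1 f -> is_poly d n (fun x => f x ^ n).
Proof.
  intros H. induction n.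
  - apply poly_ext with (fun _ => 1). apply poly_const. intros; simpl; auto.
  - apply poly_ext with (fun x => f x * f x ^ n). apply (poly_mul d 1 n); auto.
    intros; simpl; auto.
Qed.

Lemma mono_from_app0 j l i x : mono_from (repeat 0%nat j ++ l) i x = mono_from l (i + j) x.
Proof. revert i; induction j; intros i; simpl. rewrite Nat.add_0_r; auto. rewrite IHj. rewrite Nat.add_succ_r. simpl. ring. Qed.

Lemma poly_coord d j : (j < d)%nat -> is_poly d 1 (fun x => x j).
Proof.
  intros Hj. exists ((1, repeat 0%nat j ++ 1%nat :: repeat 0%nat (d - j - 1)) :: nil). split.
  - constructor; auto. simpl. rewrite length_app, list_sum_app. simpl.
    rewrite !repeat_length, !list_sum_repeat0. split; lia.
  - intros x. simpl. unfold mono. rewrite mono_from_app0. simpl. rewrite mono_from_zeros. lra.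
Qed.

Lemma poly_rsum d k n (f : nat -> (nat -> R) -> R) :
  (forall j, (j < n)%nat -> is_poly d k (f j)) -> is_poly d k (fun x => rsum n (fun j => f j x)).
Proof.
  induction n; intros H; simpl. apply poly_zero.
  apply poly_add. apply IHn; auto. apply H; lia.
Qed.

Lemma mono_comp d e (phi : nat -> (nat -> R) -> R) :
  (forall j, (j < d)%nat -> is_poly e 1 (phi j)) ->
  forall a i, (i + length a = d)%nat -> is_poly e (list_sum a) (fun y => mono_from a i (fun j => phi j y)).
Proof.
  intros Hphi a. induction a as [|ai a IH]; intros i Hi; simpl.
  - apply poly_const.
  - simpl in Hi. apply (poly_mul e ai (list_sum a)).
    + apply poly_pow. apply Hphi. lia.
    + apply IH. lia.
Qed.

Lemma poly_comp d e k f (phi : nat -> (nat -> R) -> R) :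
  is_poly d k f -> (forall j, (j < d)%nat -> is_poly e 1 (phi j)) ->
  is_poly e k (fun y => f (fun j => phi j y)).
Proof.
  intros [l [Hl F]] Hphi.
  apply poly_ext with (fun y => eval_terms l (fun j => phi j y)); [|intros; rewrite F; auto].
  clear F. induction l as [|p l IH]; simpl. apply poly_zero.
  inversion Hl; subst. destruct H1 as [Hlen Hsum].
  apply poly_add; [|apply IH; auto].
  apply poly_scal. apply poly_mono with (list_sum (snd p)); auto.
  apply mono_comp with d; auto.
Qed.

Lemma mono_from_ext a i x y : (forall j, (i <= j < i + length a)%nat -> x j = y j) ->
  mono_from a i x = mono_from a i y.
Proof.
  revert i; induction a; intros i H; simpl; auto. simpl in H.
  rewrite H by lia. rewrite (IHa (S i)) by (intros; apply H; lia). auto.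
Qed.

Lemma poly_local d k f x y : is_poly d k f -> (forall j, (j < d)%nat -> x j = y j) -> f x = f y.
Proof.
  intros [l [Hl F]] H. rewrite !F. clear F. induction l as [|p l IH]; simpl; auto.
  inversion Hl; subst. rewrite IH by auto. unfold mono. rewrite (mono_from_ext _ 0 x y); auto.
  intros j Hj. apply H. destruct H2. lia.
Qed.

Fixpoint decs (s : nat) (a : list nat) : list nat :=
  match a, s with
  | x :: a', O => pred x :: a'
  | x :: a', S s' => x :: decs s' a'
  | nil, _ => nil
  end.

Lemma decs_len s a : length (decs s a) = length a.
Proof. revert s; induction a; intros [|s]; simpl; auto. Qed.

Lemma decs_sum s a : (0 < nth s a 0%nat)%nat -> list_sum (decs s a) = (list_sum a - 1)%nat.
Proof.
  revert s; induction a; intros [|s] H; simpl in *; try lia.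
  rewrite IHa by auto. assert (list_sum a0 >= 1)%nat.
  { clear IHa. revert s H; induction a0; intros [|s] H; simpl in *; try lia. apply IHa0 in H. lia. }
  lia.
Qed.

Lemma decs_mono s a i z : (0 < nth s a 0%nat)%nat ->
  mono_from a i z = z (i + s)%nat * mono_from (decs s a) i z.
Proof.
  revert s i; induction a; intros [|s] i H; simpl in *; try lia.
  - rewrite Nat.add_0_r. destruct a; [lia|]. simpl. ring.
  - rewrite (IHa s (S i) H). rewrite Nat.add_succ_r. simpl. ring.
Qed.

Lemma mono_upd0 s a i z : nth s a 0%nat = 0%nat -> mono_from a i z = mono_from a i (upd z (i + s) 0).
Proof.
  revert s i; induction a; intros [|s] i H; simpl in *; auto.
  - subst. simpl. f_equal. apply mono_from_ext. intros j Hj. rewrite upd_neq by lia. auto.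
  - rewrite upd_neq by lia. rewrite (IHa s (S i) H). rewrite Nat.add_succ_r. auto.
Qed.

Lemma mono_upd0' s a i z : (0 < nth s a 0%nat)%nat -> mono_from a i (upd z (i + s) 0) = 0.
Proof.
  intros H. rewrite decs_mono with (s := s) by auto. rewrite upd_eq. lra.
Qed.

Definition wl (s : nat) (l : list (R * list nat)) :=
  flat_map (fun p => if Nat.eqb (nth s (snd p) 0%nat) 0 then nil else (fst p, decs s (snd p)) :: nil) l.

Lemma eval_wl s l z : eval_terms l z = eval_terms l (upd z s 0) + z s * eval_terms (wl s l) z.
Proof.
  induction l as [|p l IH]; simpl; [lra|]. rewrite eval_app. rewrite IH.
  unfold mono. destruct (Nat.eqb_spec (nth s (snd p) 0%nat) 0) as [E|E]; simpl.
  - assert (A := mono_upd0 s (snd p) 0 z E); simpl in A; rewrite <- A. ring.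
  - assert (A := mono_upd0' s (snd p) 0 z ltac:(lia)); simpl in A; rewrite A.
    assert (B := decs_mono s (snd p) 0 z ltac:(lia)); simpl in B; rewrite B. unfold mono. ring.
Qed.

Lemma nth_sum0 a s : list_sum a = 0%nat -> nth s a 0%nat = 0%nat.
Proof. revert s; induction a; intros [|s] H; simpl in *; auto; try lia. apply IHa. lia. Qed.

Lemma poly_split n k G s :
  is_poly n k G ->
  exists W, (match k with O => forall z, W z = 0 | S j => is_poly n j W end) /\
    forall z, G z = G (upd z s 0) + z s * W z.
Proof.
  intros [l [Hl F]]. exists (eval_terms (wl s l)). split.
  - destruct k.
    + intros z. assert (E : wl s l = nil).
      { clear F. induction l as [|p l IH]; simpl; auto. inversion Hl; subst.
        destruct H1 as [_ H1]. replace (nth s (snd p) 0%nat) with 0%nat. simpl. auto.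
        symmetry. apply nth_sum0. lia. }
      rewrite E. auto.
    + exists (wl s l). split; auto. unfold wl. apply Forall_flat_map.
      eapply Forall_impl; [|exact Hl]. intros p [H1 H2].
      destruct (Nat.eqb_spec (nth s (snd p) 0%nat) 0); auto. constructor; auto. simpl.
      rewrite decs_len, decs_sum by lia. split; lia.
  - intros z. rewrite !F. apply eval_wl.
Qed.

Fixpoint UP (k : nat) (f : R -> R) : Prop :=
  match k with
  | O => forall t, f t = f 0
  | S k => exists c g, UP k g /\ forall t, f t = c + t * g t
  end.

Lemma UP_ext k f g : UP k f -> (forall t, f t = g t) -> UP k g.
Proof.
  destruct k; simpl; intros H E.
  - intros t. rewrite <- !E. auto.
  - destruct H as [c [h [Hh F]]]. exists c, h. split; auto. intros t; rewrite <- E; auto.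
Qed.

Lemma UP_const k c : UP k (fun _ => c).
Proof. revert c; induction k; intros c; simpl; auto. exists c, (fun _ => 0). split. apply IHk.
  intros; ring. Qed.

Lemma UP_S k f : UP k f -> UP (S k) f.
Proof.
  revert f; induction k; intros f H.
  - exists (f 0), (fun _ => 0). split. simpl; auto. intros t; rewrite H; lra.
  - destruct H as [c [g [Hg F]]]. exists c, g. split; auto.
Qed.

Lemma UP_le k k' f : (k <= k')%nat -> UP k f -> UP k' f.
Proof. induction 1; auto. intros; apply UP_S; auto. Qed.

Lemma UP_add k f g : UP k f -> UP k g -> UP k (fun t => f t + g t).
Proof.
  revert f g; induction k; intros f g Hf Hg; simpl in *.
  - intros t; rewrite Hf, Hg; auto.
  - destruct Hf as [c [f' [Hf' F]]], Hg as [c' [g' [Hg' G]]].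
    exists (c + c'), (fun t => f' t + g' t). split; auto. intros t; rewrite F, G; lra.
Qed.

Lemma UP_scal k c f : UP k f -> UP k (fun t => c * f t).
Proof.
  revert f; induction k; intros f Hf; simpl in *.
  - intros t; rewrite Hf; auto.
  - destruct Hf as [c0 [f' [Hf' F]]]. exists (c * c0), (fun t => c * f' t). split; auto.
    intros t; rewrite F; lra.
Qed.

Lemma UP_mul a b f g : UP a f -> UP b g -> UP (a + b) (fun t => f t * g t).
Proof.
  revert f; induction a; intros f Hf Hg; simpl in *.
  - apply UP_ext with (fun t => f 0 * g t). apply UP_scal; auto. intros t; rewrite (Hf t); auto.
  - destruct Hf as [c [f' [Hf' F]]]. change (UP (S (a + b)) (fun t => f t * g t)).
    apply UP_ext with (fun t => c * g t + t * (f' t * g t)).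
    + apply UP_add. apply UP_le with b; [lia|]. apply UP_scal; auto.
      exists 0, (fun t => f' t * g t). split. apply IHa; auto. intros; lra.
    + intros t; rewrite F; lra.
Qed.

Lemma UP_id : UP 1 (fun t => t).
Proof. exists 0, (fun _ => 1). split. simpl; auto. intros; lra. Qed.

Lemma UP_pow n : UP n (fun t => t ^ n).
Proof.
  induction n. apply UP_ext with (fun _ => 1). apply UP_const. intros; simpl; auto.
  apply UP_ext with (fun t => t * t ^ n). apply (UP_mul 1 n); auto. apply UP_id. intros; simpl; auto.
Qed.

Lemma UP_div k f : UP (S k) f -> forall a, exists g, UP k g /\ forall t, f t = f a + (t - a) * g t.
Proof.
  revert f; induction k; intros f Hf a.
  - destruct Hf as [c [g [Hg F]]]. exists g. split; auto. intros t. rewrite !F. rewrite (Hg t), (Hg a). lra.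
  - destruct Hf as [c [g [Hg F]]]. destruct (IHk g Hg a) as [h [Hh G]].
    exists (fun t => g a + t * h t). split.
    + exists (g a), h. split; auto.
    + intros t. rewrite !F. rewrite (G t). lra.
Qed.

Lemma UP_zero k : forall f a b, UP k f -> a < b -> (forall t, a <= t <= b -> f t = 0) -> forall t, f t = 0.
Proof.
  induction k; intros f a b Hf Hab H t.
  - simpl in Hf. rewrite Hf. rewrite <- (Hf a). apply H. lra.
  - destruct (UP_div k f Hf a) as [g [Hg G]].
    assert (Hg0 : forall t, g t = 0).
    { apply IHk with ((a + b) / 2) b; auto. lra. intros s Hs.
      assert (E := G s). rewrite (H a) in E by lra. rewrite H in E by lra.
      assert (s - a <> 0) by lra.
      assert (E2 : (s - a) * g s = 0) by lra.
      apply Rmult_integral in E2. destruct E2 as [E2|E2]; lra. }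
    rewrite G, Hg0, H by lra. lra.
Qed.

Lemma mono_UP a i x j : UP (list_sum a) (fun t => mono_from a i (upd x j t)).
Proof.
  revert i; induction a as [|ai a IH]; intros i; simpl.
  - intros; auto.
  - apply (UP_mul ai (list_sum a)); [|apply IH].
    destruct (Nat.eq_dec i j) as [->|Hne].
    + apply UP_ext with (fun t => t ^ ai). apply UP_pow. intros; rewrite upd_eq; auto.
    + apply UP_ext with (fun _ => x i ^ ai). apply UP_const. intros; rewrite upd_neq; auto.
Qed.

Lemma poly_UP d k f x j : is_poly d k f -> UP k (fun t => f (upd x j t)).
Proof.
  intros [l [Hl F]]. apply UP_ext with (fun t => eval_terms l (upd x j t)); [|intros; rewrite F; auto].
  clear F. induction l as [|p l IH]; simpl. apply UP_const. inversion Hl; subst. destruct H1.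
  apply UP_add; [|apply IH; auto]. apply UP_scal. apply UP_le with (list_sum (snd p)); auto.
  apply mono_UP.
Qed.

(* identity theorem on a box *)
Lemma poly_box_zero d k f (p : nat -> R) r : is_poly d k f -> 0 < r ->
  (forall x, (forall j, (j < d)%nat -> Rabs (x j - p j) <= r) -> f x = 0) ->
  forall x, f x = 0.
Proof.
  intros Hf Hr H0.
  assert (P : forall n x, (forall j, (n <= j < d)%nat -> Rabs (x j - p j) <= r) -> f x = 0).
  { induction n; intros x Hx.
    - apply H0. intros j Hj. apply Hx. lia.
    - rewrite <- (upd_same x n).
      apply (UP_zero k (fun t => f (upd x n t)) (p n - r) (p n + r)); [apply poly_UP with d; auto|lra|].
      intros t Ht. apply IHn. intros j Hj.
      destruct (Nat.eq_dec j n) as [->|Hne].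
      + rewrite upd_eq. apply Rabs_le. lra.
      + rewrite upd_neq by auto. apply Hx. lia. }
  intros x. apply (P d). intros; lia.
Qed.

From Coquelicot Require Import Coquelicot.
Open Scope R_scope.

Definition closeN (N : nat) (y z : nat -> R) (del : R) := forall j, (j < N)%nat -> Rabs (y j - z j) < del.
Definition UC N (f : (nat -> R) -> R) := forall eps, 0 < eps -> exists del, 0 < del /\
  forall y z, closeN N y z del -> Rabs (f y - f z) < eps.
Definition BND (f : (nat -> R) -> R) := exists B, forall x, Rabs (f x) <= B.
Definition BUC N f := BND f /\ UC N f.

Lemma BND_nonneg f : BND f -> exists B, 0 <= B /\ forall x, Rabs (f x) <= B.
Proof. intros [B HB]. exists B. split; auto. eapply Rle_trans; [apply Rabs_pos|apply (HB (fun _ => 0))]. Qed.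

Lemma UC_const N c : UC N (fun _ => c).
Proof. intros eps He. exists 1. split; [lra|]. intros. rewrite Rminus_eq_0, Rabs_R0. auto. Qed.

Lemma UC_plus N f g : UC N f -> UC N g -> UC N (fun x => f x + g x).
Proof.
  intros Hf Hg eps He. destruct (Hf (eps/2) ltac:(lra)) as [d1 [Hd1 F]]. destruct (Hg (eps/2) ltac:(lra)) as [d2 [Hd2 G]].
  exists (Rmin d1 d2). split. apply Rmin_pos; auto. intros y z Hc.
  assert (c1 : closeN N y z d1). { intros j Hj. eapply Rlt_le_trans; [apply Hc; auto|apply Rmin_l]. }
  assert (c2 : closeN N y z d2). { intros j Hj. eapply Rlt_le_trans; [apply Hc; auto|apply Rmin_r]. }
  specialize (F y z c1). specialize (G y z c2).
  replace (f y + g y - (f z + g z)) with ((f y - f z) + (g y - g z)) by ring.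
  eapply Rle_lt_trans; [apply Rabs_triang|]. lra.
Qed.

Lemma UC_scal N c f : UC N f -> UC N (fun x => c * f x).
Proof.
  intros Hf eps He. destruct (Hf (eps / (Rabs c + 1))) as [d [Hd F]].
  { apply Rdiv_lt_0_compat; auto. assert (0 <= Rabs c) by apply Rabs_pos. lra. }
  exists d. split; auto. intros y z Hc. specialize (F y z Hc).
  replace (c * f y - c * f z) with (c * (f y - f z)) by ring. rewrite Rabs_mult.
  assert (0 <= Rabs c) by apply Rabs_pos.
  assert (E : eps = (Rabs c + 1) * (eps / (Rabs c + 1))) by (field; lra).
  rewrite E. assert (0 <= Rabs (f y - f z)) by apply Rabs_pos. nra.
Qed.

Lemma UC_mul N f g : BUC N f -> BUC N g -> UC N (fun x => f x * g x).
Proof.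
  intros [Bf Uf] [Bg Ug]. apply BND_nonneg in Bf as [A [HA0 HA]]. apply BND_nonneg in Bg as [B [HB0 HB]].
  intros eps He. set (e1 := eps / (A + B + 1)).
  assert (He1 : 0 < e1) by (unfold e1; apply Rdiv_lt_0_compat; lra).
  destruct (Uf e1 He1) as [d1 [Hd1 F]]. destruct (Ug e1 He1) as [d2 [Hd2 G]].
  exists (Rmin d1 d2). split. apply Rmin_pos; auto. intros y z Hc.
  assert (c1 : closeN N y z d1). { intros j Hj. eapply Rlt_le_trans; [apply Hc; auto|apply Rmin_l]. }
  assert (c2 : closeN N y z d2). { intros j Hj. eapply Rlt_le_trans; [apply Hc; auto|apply Rmin_r]. }
  specialize (F y z c1). specialize (G y z c2).
  replace (f y * g y - f z * g z) with (f y * (g y - g z) + g z * (f y - f z)) by ring.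
  eapply Rle_lt_trans; [apply Rabs_triang|]. rewrite !Rabs_mult.
  specialize (HA y). specialize (HB z).
  assert (0 <= Rabs (f y)) by apply Rabs_pos. assert (0 <= Rabs (g z)) by apply Rabs_pos.
  assert (Rabs (f y) * Rabs (g y - g z) <= A * e1) by (apply Rmult_le_compat; auto; try apply Rabs_pos; lra).
  assert (Rabs (g z) * Rabs (f y - f z) <= B * e1) by (apply Rmult_le_compat; auto; try apply Rabs_pos; lra).
  assert (E : eps = (A + B + 1) * e1) by (unfold e1; field; lra). nra.
Qed.

Lemma BND_plus f g : BND f -> BND g -> BND (fun x => f x + g x).
Proof. intros [A HA] [B HB]. exists (A + B). intros x. eapply Rle_trans; [apply Rabs_triang|]. specialize (HA x); specialize (HB x); lra. Qed.

Lemma BND_mul f g : BND f -> BND g -> BND (fun x => f x * g x).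
Proof.
  intros Hf Hg. apply BND_nonneg in Hf as [A [HA0 HA]]. apply BND_nonneg in Hg as [B [HB0 HB]].
  exists (A * B). intros x. rewrite Rabs_mult. apply Rmult_le_compat; auto; apply Rabs_pos.
Qed.

Lemma BND_const c : BND (fun _ => c).
Proof. exists (Rabs c). intros; lra. Qed.

Lemma BUC_const N c : BUC N (fun _ => c).
Proof. split. apply BND_const. apply UC_const. Qed.
Lemma BUC_plus N f g : BUC N f -> BUC N g -> BUC N (fun x => f x + g x).
Proof. intros [] []. split. apply BND_plus; auto. apply UC_plus; auto. Qed.
Lemma BUC_mul N f g : BUC N f -> BUC N g -> BUC N (fun x => f x * g x).
Proof. intros Hf Hg. split. destruct Hf, Hg. apply BND_mul; auto. apply UC_mul; auto. Qed.
Lemma BUC_scal N c f : BUC N f -> BUC N (fun x => c * f x).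
Proof. intros Hf. apply BUC_mul; auto. apply BUC_const. Qed.
Lemma BUC_pow N f n : BUC N f -> BUC N (fun x => f x ^ n).
Proof. intros Hf. induction n; simpl. apply BUC_const. apply BUC_mul; auto. Qed.
Lemma BUC_ext N f g : BUC N f -> (forall x, f x = g x) -> BUC N g.
Proof. intros H E. replace g with f; auto. extensionality x; auto. Qed.
Lemma BUC_rsum N n (f : nat -> (nat -> R) -> R) : (forall j, (j < n)%nat -> BUC N (f j)) ->
  BUC N (fun x => rsum n (fun j => f j x)).
Proof. induction n; intros H; simpl. apply BUC_const. apply BUC_plus. apply IHn; auto. apply H; lia. Qed.

Lemma Rmax_lip a b a' b' : Rabs (Rmax a b - Rmax a' b') <= Rmax (Rabs (a - a')) (Rabs (b - b')).
Proof. unfold Rmax, Rabs. repeat destruct Rle_dec; repeat destruct Rcase_abs; lra. Qed.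
Lemma Rmin_lip a b a' b' : Rabs (Rmin a b - Rmin a' b') <= Rmax (Rabs (a - a')) (Rabs (b - b')).
Proof. unfold Rmin, Rmax, Rabs. repeat destruct Rle_dec; repeat destruct Rcase_abs; lra. Qed.

Lemma UC_max N f g : UC N f -> UC N g -> UC N (fun x => Rmax (f x) (g x)).
Proof.
  intros Hf Hg eps He. destruct (Hf eps He) as [d1 [Hd1 F]]. destruct (Hg eps He) as [d2 [Hd2 G]].
  exists (Rmin d1 d2). split. apply Rmin_pos; auto. intros y z Hc.
  assert (c1 : closeN N y z d1). { intros j Hj. eapply Rlt_le_trans; [apply Hc; auto|apply Rmin_l]. }
  assert (c2 : closeN N y z d2). { intros j Hj. eapply Rlt_le_trans; [apply Hc; auto|apply Rmin_r]. }
  eapply Rle_lt_trans; [apply Rmax_lip|]. apply Rmax_lub_lt; auto.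
Qed.
Lemma UC_min N f g : UC N f -> UC N g -> UC N (fun x => Rmin (f x) (g x)).
Proof.
  intros Hf Hg eps He. destruct (Hf eps He) as [d1 [Hd1 F]]. destruct (Hg eps He) as [d2 [Hd2 G]].
  exists (Rmin d1 d2). split. apply Rmin_pos; auto. intros y z Hc.
  assert (c1 : closeN N y z d1). { intros j Hj. eapply Rlt_le_trans; [apply Hc; auto|apply Rmin_l]. }
  assert (c2 : closeN N y z d2). { intros j Hj. eapply Rlt_le_trans; [apply Hc; auto|apply Rmin_r]. }
  eapply Rle_lt_trans; [apply Rmin_lip|]. apply Rmax_lub_lt; auto.
Qed.

Lemma UC_lin N (a : nat -> R) : UC N (fun y => rsum N (fun j => a j * y j)).
Proof.
  intros eps He. set (S := rsum N (fun j => Rabs (a j))).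
  assert (HS : 0 <= S) by (apply rsum_nonneg; intros; apply Rabs_pos).
  exists (eps / (S + 1)). split. apply Rdiv_lt_0_compat; lra. intros y z Hc.
  rewrite <- rsum_minus.
  eapply Rle_lt_trans. apply rsum_abs.
  apply Rle_lt_trans with (rsum N (fun j => Rabs (a j) * (eps / (S + 1)))).
  - apply rsum_le. intros j Hj. replace (a j * y j - a j * z j) with (a j * (y j - z j)) by ring.
    rewrite Rabs_mult. apply Rmult_le_compat_l. apply Rabs_pos. left; apply Hc; auto.
  - rewrite (rsum_ext N _ (fun j => (eps / (S + 1)) * Rabs (a j))) by (intros; ring).
    rewrite rsum_scal. fold S. apply Rlt_le_trans with (eps / (S + 1) * (S + 1)).
    + apply Rmult_lt_compat_l. apply Rdiv_lt_0_compat; lra. lra.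
    + right. field. lra.
Qed.

Lemma close_upd N y z m s del : closeN N y z del -> 0 < del -> closeN N (upd y m s) (upd z m s) del.
Proof.
  intros H Hd j Hj. destruct (Nat.eq_dec j m) as [->|Hne].
  - rewrite !upd_eq, Rminus_eq_0, Rabs_R0. auto.
  - rewrite !upd_neq by auto. apply H; auto.
Qed.

Lemma UC_upd N f m s : UC N f -> UC N (fun y => f (upd y m s)).
Proof.
  intros H eps He. destruct (H eps He) as [d [Hd F]]. exists d. split; auto. intros y z Hc.
  apply F. apply close_upd; auto.
Qed.

Definition clip (M : R) (x : nat -> R) : nat -> R := fun j => Rmax (- M) (Rmin M (x j)).

Lemma BUC_clip N M j : (j < N)%nat -> BUC N (fun x => clip M x j).
Proof.
  intros Hj. split.
  - exists (Rabs M + 1). intros x. unfold clip, Rmax, Rmin. repeat destruct Rle_dec; unfold Rabs; repeat destruct Rcase_abs; lra.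
  - intros eps He. exists eps. split; auto. intros y z Hc. unfold clip.
    eapply Rle_lt_trans; [apply Rmax_lip|]. rewrite Rminus_eq_0, Rabs_R0.
    apply Rmax_lub_lt; auto. eapply Rle_lt_trans; [apply Rmin_lip|]. rewrite Rminus_eq_0, Rabs_R0.
    apply Rmax_lub_lt; auto.
Qed.

Lemma BUC_poly_clip d k f M : is_poly d k f -> BUC d (fun x => f (clip M x)).
Proof.
  intros [l [Hl F]]. apply BUC_ext with (fun x => eval_terms l (clip M x)); [|intros; rewrite F; auto].
  clear F. induction l as [|p l IH]; simpl. apply BUC_const.
  inversion Hl; subst. destruct H1 as [Hlen _]. apply BUC_plus; [|apply IH; auto].
  apply BUC_scal. unfold mono.
  assert (G : forall a i, (i + length a = d)%nat -> BUC d (fun x => mono_from a i (clip M x))).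
  { induction a as [|ai a IHa]; intros i Hi; simpl. apply BUC_const. simpl in Hi.
    apply BUC_mul. apply BUC_pow. apply BUC_clip. lia. apply IHa. lia. }
  apply G. lia.
Qed.

Lemma UC1_cont (f : R -> R) :
  (forall eps, 0 < eps -> exists del, 0 < del /\ forall s t, Rabs (s - t) < del -> Rabs (f s - f t) < eps) ->
  forall t, continuous f t.
Proof.
  intros H t. apply continuity_pt_filterlim. intros eps Heps. destruct (H eps Heps) as [del [Hd Hf]].
  exists del. split; auto. intros x [_ Hx]. simpl in *. unfold R_dist in *. apply Hf. exact Hx.
Qed.

Lemma UC_slice_cont N C y m : (m < N)%nat -> UC N C -> forall t, continuous (fun t => C (upd y m t)) t.
Proof.
  intros Hm H. apply UC1_cont. intros eps He. destruct (H eps He) as [d [Hd F]]. exists d. split; auto.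
  intros s t Hst. apply F. intros j Hj. destruct (Nat.eq_dec j m) as [->|Hne].
  - rewrite !upd_eq. auto.
  - rewrite !upd_neq by auto. rewrite Rminus_eq_0, Rabs_R0. auto.
Qed.

Lemma RInt_tot_RInt f a b : ex_RInt f a b -> RInt_tot f a b = RInt f a b.
Proof.
  intros H. unfold RInt_tot. destruct excluded_middle_informative as [h|h].
  - rewrite (RInt_Reals f a b (epsilon h (fun _ => True))). auto.
  - exfalso. apply h. constructor. apply ex_RInt_Reals_0. auto.
Qed.

Lemma int_piece (f g : R -> R) a b M : -M <= a -> a <= b -> b <= M -> (forall t, continuous f t) ->
  (forall t, -M < t < a -> g t = 0) -> (forall t, a < t < b -> g t = f t) -> (forall t, b < t < M -> g t = 0) ->
  ex_RInt g (-M) M /\ RInt g (-M) M = RInt f a b.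
Proof.
  intros H1 H2 H3 Hc G1 G2 G3.
  assert (E1 : ex_RInt g (-M) a).
  { apply ex_RInt_ext with (fun _ => 0). rewrite Rmin_left, Rmax_right by lra. intros; rewrite G1; auto. apply ex_RInt_const. }
  assert (E2 : ex_RInt g a b).
  { apply ex_RInt_ext with f. rewrite Rmin_left, Rmax_right by lra. intros; rewrite G2; auto.
    apply (ex_RInt_continuous (V := R_CompleteNormedModule)). intros; apply Hc. }
  assert (E3 : ex_RInt g b M).
  { apply ex_RInt_ext with (fun _ => 0). rewrite Rmin_left, Rmax_right by lra. intros; rewrite G3; auto. apply ex_RInt_const. }
  split. apply ex_RInt_Chasles with b; auto. apply ex_RInt_Chasles with a; auto.
  rewrite <- (RInt_Chasles g (-M) b M) by (auto; apply ex_RInt_Chasles with a; auto).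
  rewrite <- (RInt_Chasles g (-M) a b) by auto.
  rewrite (RInt_ext g (fun _ => 0) (-M) a) by (rewrite Rmin_left, Rmax_right by lra; intros; rewrite G1; auto).
  rewrite (RInt_ext g f a b) by (rewrite Rmin_left, Rmax_right by lra; intros; rewrite G2; auto).
  rewrite (RInt_ext g (fun _ => 0) b M) by (rewrite Rmin_left, Rmax_right by lra; intros; rewrite G3; auto).
  rewrite !RInt_const. simpl. unfold plus, scal; simpl. unfold mult; simpl. ring.
Qed.

Lemma RInt_bound f p q B : ex_RInt f p q -> (forall t, Rabs (f t) <= B) -> Rabs (RInt f p q) <= Rabs (q - p) * B.
Proof.
  intros E H. destruct (Rle_dec p q).
  - rewrite (Rabs_right (q - p)) by lra. apply abs_RInt_le_const; auto.
  - rewrite <- (opp_RInt_swap f q p) by (apply ex_RInt_swap; auto). unfold opp; simpl. rewrite Rabs_Ropp.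
    rewrite (Rabs_left (q - p)) by lra. replace (- (q - p)) with (p - q) by ring.
    apply abs_RInt_le_const; auto. lra. apply ex_RInt_swap; auto.
Qed.


Definition hs := ((nat -> R) * R)%type.
Definition lin N (a : nat -> R) (x : nat -> R) := rsum N (fun j => a j * x j).
Definition indh N (h : hs) x := if Rle_dec (lin N (fst h) x) (snd h) then 1 else 0.
Definition indH N (H : list hs) x := fold_right (fun h acc => indh N h x * acc) 1 H.

Fixpoint J (M : R) (m : nat) (F : (nat -> R) -> R) (y : nat -> R) : R :=
  match m with
  | O => F y
  | S m => RInt_tot (fun t => J M m F (upd y m t)) (- M) M
  end.

Definition am m (h : hs) := fst h m.
Definition bnd N m (h : hs) y := (snd h - lin N (fst h) (upd y m 0)) / am m h.
Definition Lo N M m (H : list hs) y := fold_right (fun h acc => if Rlt_dec (am m h) 0 then Rmax (bnd N m h y) acc else acc) (- M) H.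
Definition Up N M m (H : list hs) y := fold_right (fun h acc => if Rlt_dec 0 (am m h) then Rmin (bnd N m h y) acc else acc) M H.
Definition Hf m (H : list hs) := filter (fun h => if Req_EM_T (am m h) 0 then true else false) H.

Lemma lin_upd N a y m t : (m < N)%nat -> lin N a (upd y m t) = lin N a (upd y m 0) + a m * t.
Proof.
  intros Hm. unfold lin. rewrite (rsum_change N _ (fun j => a j * upd y m 0 j) m Hm).
  rewrite !upd_eq. ring. intros j Hj. rewrite !upd_neq by auto. auto.
Qed.

Lemma indh_zero N m h y t : (m < N)%nat -> am m h = 0 -> indh N h (upd y m t) = indh N h y.
Proof.
  intros Hm Ha. unfold indh. rewrite (lin_upd N _ y m t Hm).
  assert (E : lin N (fst h) y = lin N (fst h) (upd y m 0) + fst h m * y m).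
  { rewrite <- (lin_upd N _ y m (y m) Hm). rewrite upd_same. auto. }
  rewrite E. unfold am in Ha. rewrite Ha. replace (0 * t) with (0 * y m) by ring. auto.
Qed.

Lemma indh_pos N m h y t : (m < N)%nat -> 0 < am m h ->
  indh N h (upd y m t) = if Rle_dec t (bnd N m h y) then 1 else 0.
Proof.
  intros Hm Ha. unfold indh, bnd. rewrite (lin_upd N _ y m t Hm). unfold am in *.
  set (r := lin N (fst h) (upd y m 0)). set (a := fst h m). set (b := snd h). fold a in Ha.
  assert (E : (b - r) / a * a = b - r) by (field; lra).
  destruct (Rle_dec (r + a * t) b); destruct (Rle_dec t ((b - r) / a)); auto; exfalso; nra.
Qed.

Lemma indh_neg N m h y t : (m < N)%nat -> am m h < 0 ->
  indh N h (upd y m t) = if Rle_dec (bnd N m h y) t then 1 else 0.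
Proof.
  intros Hm Ha. unfold indh, bnd. rewrite (lin_upd N _ y m t Hm). unfold am in *.
  set (r := lin N (fst h) (upd y m 0)). set (a := fst h m). set (b := snd h). fold a in Ha.
  assert (E : (b - r) / a * a = b - r) by (field; lra).
  destruct (Rle_dec (r + a * t) b); destruct (Rle_dec ((b - r) / a) t); auto; exfalso; nra.
Qed.

Definition I01 (p : Prop) (dp : {p} + {~ p}) : R := if dp then 1 else 0.

Lemma ind_split N M m H y t : (m < N)%nat -> -M <= t <= M ->
  indH N H (upd y m t) = indH N (Hf m H) y *
    (if Rle_dec (Lo N M m H y) t then if Rle_dec t (Up N M m H y) then 1 else 0 else 0).
Proof.
  intros Hm Ht. induction H as [|h H IH]; simpl.
  - repeat destruct Rle_dec; try lra.
  - unfold Hf in *. simpl. rewrite IH.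
    destruct (Req_EM_T (am m h) 0) as [E|E].
    + simpl. rewrite (indh_zero N m h y t Hm E).
      destruct (Rlt_dec (am m h) 0); [lra|]. destruct (Rlt_dec 0 (am m h)); [lra|]. ring.
    + destruct (Rlt_dec (am m h) 0) as [Hn|Hn].
      * rewrite (indh_neg N m h y t Hm Hn). destruct (Rlt_dec 0 (am m h)); [lra|].
        clear IH. generalize (Lo N M m H y) (Up N M m H y) (bnd N m h y) (indH N (filter (fun h : hs => if Req_dec_T (am m h) 0 then true else false) H) y).
        intros L U c X. unfold Rmax.
        repeat destruct Rle_dec; try ring; exfalso; lra.
      * assert (Hp : 0 < am m h) by lra. rewrite (indh_pos N m h y t Hm Hp).
        destruct (Rlt_dec 0 (am m h)); [|lra].
        clear IH. generalize (Lo N M m H y) (Up N M m H y) (bnd N m h y) (indH N (filter (fun h : hs => if Req_dec_T (am m h) 0 then true else false) H) y).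
        intros L U c X. unfold Rmin.
        repeat destruct Rle_dec; try ring; exfalso; lra.
Qed.

Lemma Lo_ge N M m H y : - M <= Lo N M m H y.
Proof. induction H; simpl. lra. destruct Rlt_dec; auto. eapply Rle_trans; [exact IHlist|apply Rmax_r]. Qed.
Lemma Up_le N M m H y : Up N M m H y <= M.
Proof. induction H; simpl. lra. destruct Rlt_dec; auto. eapply Rle_trans; [apply Rmin_r|exact IHlist]. Qed.

Lemma UC_ext N f g : UC N f -> (forall x, f x = g x) -> UC N g.
Proof. intros H E. replace g with f; auto. extensionality x; auto. Qed.

Lemma UC_bnd N m h : UC N (bnd N m h).
Proof.
  unfold bnd. apply (UC_ext N (fun y => snd h / am m h + (- / am m h) * lin N (fst h) (upd y m 0))).
  - apply UC_plus. apply UC_const. apply UC_scal. apply UC_upd. apply UC_lin.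
  - intros x. unfold Rdiv. ring.
Qed.

Lemma UC_Lo N M m H : UC N (Lo N M m H).
Proof.
  induction H. apply UC_const.
  apply (UC_ext N (fun y => if Rlt_dec (am m a) 0 then Rmax (bnd N m a y) (Lo N M m H y) else Lo N M m H y)); [|intros; reflexivity].
  destruct (Rlt_dec (am m a) 0). apply UC_max; auto. apply UC_bnd. auto.
Qed.
Lemma UC_Up N M m H : UC N (Up N M m H).
Proof.
  induction H. apply UC_const.
  apply (UC_ext N (fun y => if Rlt_dec 0 (am m a) then Rmin (bnd N m a y) (Up N M m H y) else Up N M m H y)); [|intros; reflexivity].
  destruct (Rlt_dec 0 (am m a)). apply UC_min; auto. apply UC_bnd. auto.
Qed.

Lemma cont_ex (f : R -> R) p q : (forall t, continuous f t) -> ex_RInt f p q.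
Proof. intros H. apply (ex_RInt_continuous (V := R_CompleteNormedModule)). intros; apply H. Qed.

Lemma UC_close_weak N y z d1 d2 : closeN N y z d1 -> d1 <= d2 -> closeN N y z d2.
Proof. intros H Hd j Hj. eapply Rlt_le_trans; [apply H; auto|auto]. Qed.

Lemma step N M m H C : 0 < M -> (m < N)%nat -> BUC N C ->
  (forall y, ex_RInt (fun t => indH N H (upd y m t) * C (upd y m t)) (-M) M) /\
  exists C', BUC N C' /\ forall y,
    RInt_tot (fun t => indH N H (upd y m t) * C (upd y m t)) (-M) M = indH N (Hf m H) y * C' y.
Proof.
  intros HM Hm [[B0 HB] HC].
  set (a := fun y => Rmin (Lo N M m H y) M).
  set (b := fun y => Rmax (a y) (Up N M m H y)).
  assert (Ha : forall y, - M <= a y <= M).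
  { intros y. unfold a. assert (Q := Lo_ge N M m H y). unfold Rmin; destruct Rle_dec; lra. }
  assert (Hb : forall y, a y <= b y <= M).
  { intros y. unfold b. assert (Q := Up_le N M m H y). assert (Q2 := Ha y). unfold Rmax; destruct Rle_dec; lra. }
  assert (Cc : forall y, forall t, continuous (fun t => C (upd y m t)) t).
  { intros y. apply (UC_slice_cont N); auto. }
  assert (P : forall y, ex_RInt (fun t => indH N H (upd y m t) * C (upd y m t)) (-M) M /\
     RInt (fun t => indH N H (upd y m t) * C (upd y m t)) (-M) M
     = RInt (fun t => indH N (Hf m H) y * C (upd y m t)) (a y) (b y)).
  { intros y. destruct (Ha y) as [Ha1 Ha2]. destruct (Hb y) as [Hb1 Hb2].
    assert (QL := Lo_ge N M m H y). assert (QU := Up_le N M m H y).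
    apply int_piece; auto.
    - apply (UC_slice_cont N (fun z => indH N (Hf m H) y * C z) y m); auto. apply UC_scal; auto.
    - intros t Ht. rewrite (ind_split N M m H y t) by (auto; lra).
      assert (t < Lo N M m H y) by (unfold a, Rmin in Ht; destruct Rle_dec in Ht; lra).
      destruct Rle_dec; [lra|]. ring.
    - intros t Ht. rewrite (ind_split N M m H y t) by (auto; lra).
      assert (Lo N M m H y <= t /\ t <= Up N M m H y).
      { unfold b, Rmax in Ht. destruct Rle_dec in Ht; [|lra]. unfold a, Rmin in *.
        destruct Rle_dec in *; lra. }
      destruct Rle_dec; [|lra]. destruct Rle_dec; [|lra]. ring.
    - intros t Ht. rewrite (ind_split N M m H y t) by (auto; lra).
      assert (Up N M m H y < t) by (unfold b, Rmax in Ht; destruct Rle_dec in Ht; lra).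
      destruct Rle_dec; [|ring]. destruct Rle_dec; [lra|]. ring. }
  split. intros y; apply P.
  exists (fun y => RInt (fun t => C (upd y m t)) (a y) (b y)). split.
  - split.
    + exists ((2 * M) * B0). intros y.
      eapply Rle_trans. apply RInt_bound with (B := B0). apply cont_ex; auto. intros; apply HB.
      destruct (Ha y), (Hb y). assert (0 <= B0) by (eapply Rle_trans; [apply Rabs_pos|apply (HB y)]).
      apply Rmult_le_compat_r; auto. rewrite Rabs_right by lra. lra.
    + assert (HB0 : 0 <= B0) by (eapply Rle_trans; [apply Rabs_pos|apply (HB (fun _ => 0))]).
      intros eps He.
      set (e1 := eps / (4 * M + 2)). set (e2 := eps / (4 * B0 + 4)).
      assert (He1 : 0 < e1) by (unfold e1; apply Rdiv_lt_0_compat; lra).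
      assert (He2 : 0 < e2) by (unfold e2; apply Rdiv_lt_0_compat; lra).
      destruct (HC e1 He1) as [d1 [Hd1 F1]].
      destruct (UC_min N _ _ (UC_Lo N M m H) (UC_const N M) e2 He2) as [d2 [Hd2 F2]].
      assert (UCb : UC N b).
      { apply UC_max. apply UC_min. apply UC_Lo. apply UC_const. apply UC_Up. }
      destruct (UCb e2 He2) as [d3 [Hd3 F3]].
      exists (Rmin d1 (Rmin d2 d3)). split. repeat apply Rmin_pos; auto.
      intros y z Hc.
      assert (c1 : closeN N y z d1) by (eapply UC_close_weak; [exact Hc|apply Rmin_l]).
      assert (c2 : closeN N y z d2) by (eapply UC_close_weak; [exact Hc|]; eapply Rle_trans; [apply Rmin_r|apply Rmin_l]).
      assert (c3 : closeN N y z d3) by (eapply UC_close_weak; [exact Hc|]; eapply Rle_trans; [apply Rmin_r|apply Rmin_r]).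
      specialize (F2 y z c2). specialize (F3 y z c3). fold (a y) (a z) in F2.
      set (fy := fun t => C (upd y m t)). set (fz := fun t => C (upd z m t)).
      assert (Ey : forall p q, ex_RInt fy p q) by (intros; apply cont_ex; apply Cc).
      assert (Ez : forall p q, ex_RInt fz p q) by (intros; apply cont_ex; apply Cc).
      assert (Split : RInt fz (a y) (b y) = RInt fz (a y) (a z) + RInt fz (a z) (b z) + RInt fz (b z) (b y)).
      { rewrite <- (RInt_Chasles fz (a y) (a z) (b y)) by auto.
        rewrite <- (RInt_Chasles fz (a z) (b z) (b y)) by auto.
        unfold plus; simpl. ring. }
      assert (Dif : RInt fy (a y) (b y) - RInt fz (a y) (b y) = RInt (fun t => fy t - fz t) (a y) (b y)).
      { symmetry. apply (RInt_minus fy fz); auto. }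
      assert (B1 : Rabs (RInt (fun t => fy t - fz t) (a y) (b y)) <= Rabs (b y - a y) * e1).
      { apply RInt_bound. apply (ex_RInt_minus fy fz); auto. intros t. left. apply F1. apply close_upd; auto. }
      assert (B2 : Rabs (RInt fz (a y) (a z)) <= Rabs (a z - a y) * B0) by (apply RInt_bound; auto; intros; apply HB).
      assert (B3 : Rabs (RInt fz (b z) (b y)) <= Rabs (b y - b z) * B0) by (apply RInt_bound; auto; intros; apply HB).
      replace (RInt fy (a y) (b y) - RInt fz (a z) (b z)) with
        (RInt (fun t => fy t - fz t) (a y) (b y) + RInt fz (a y) (a z) + RInt fz (b z) (b y)) by lra.
      destruct (Ha y), (Hb y).
      assert (Rabs (b y - a y) <= 2 * M) by (rewrite Rabs_right; lra).
      assert (Rabs (a z - a y) < e2) by (rewrite Rabs_minus_sym; auto).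
      assert (Rabs (b y - b z) < e2) by auto.
      assert (T1 : Rabs (RInt (fun t => fy t - fz t) (a y) (b y)) <= 2 * M * e1).
      { eapply Rle_trans; [exact B1|]. apply Rmult_le_compat_r; lra. }
      assert (T2 : Rabs (RInt fz (a y) (a z)) <= e2 * B0) by (eapply Rle_trans; [exact B2|]; apply Rmult_le_compat_r; lra).
      assert (T3 : Rabs (RInt fz (b z) (b y)) <= e2 * B0) by (eapply Rle_trans; [exact B3|]; apply Rmult_le_compat_r; lra).
      assert (K1 : 2 * M * e1 < eps / 2) by (unfold e1; apply Rmult_lt_reg_r with (4 * M + 2); [lra|]; field_simplify; lra).
      assert (K2 : e2 * B0 * 2 < eps / 2) by (unfold e2; apply Rmult_lt_reg_r with (4 * B0 + 4); [lra|]; field_simplify; nra).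
      eapply Rle_lt_trans. apply Rabs_triang. eapply Rle_lt_trans. apply Rplus_le_compat_r. apply Rabs_triang. lra.
  - intros y. rewrite RInt_tot_RInt by apply P. destruct (P y) as [_ ->].
    apply (RInt_scal (fun t => C (upd y m t))). apply cont_ex; auto.
Qed.


Definition FormH N H (F : (nat -> R) -> R) := exists C, BUC N C /\ forall x, F x = indH N H x * C x.
Definition Form N F := exists H, FormH N H F.

Lemma J_ext M m F G y : (forall x, F x = G x) -> J M m F y = J M m G y.
Proof. intros E. replace F with G; auto. extensionality x; auto. Qed.

Lemma Form_J N M F m : 0 < M -> (m <= N)%nat -> Form N F -> Form N (J M m F).
Proof.
  intros HM Hm [H [C [HC EF]]]. induction m.
  - exists H, C. split; auto.
  - destruct IHm as [H' [C' [HC' E']]]; [lia|].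
    destruct (step N M m H' C' HM ltac:(lia) HC') as [_ [C'' [HC'' E'']]].
    exists (Hf m H'), C''. split; auto. intros y. simpl. rewrite <- E''.
    f_equal. extensionality t. apply E'.
Qed.

Lemma J_int N M F m : 0 < M -> (m < N)%nat -> Form N F -> forall y, ex_RInt (fun t => J M m F (upd y m t)) (-M) M.
Proof.
  intros HM Hm HF y. destruct (Form_J N M F m HM ltac:(lia) HF) as [H [C [HC E]]].
  destruct (step N M m H C HM Hm HC) as [I _].
  apply ex_RInt_ext with (fun t => indH N H (upd y m t) * C (upd y m t)).
  intros; rewrite E; auto. apply I.
Qed.

Lemma J_plus N M F G m y : 0 < M -> (m <= N)%nat -> Form N F -> Form N G ->
  J M m (fun x => F x + G x) y = J M m F y + J M m G y.
Proof.
  intros HM Hm HF HG. revert y. induction m; intros y; [reflexivity|]; cbn [J].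
  rewrite (RInt_tot_RInt (fun t => J M m F (upd y m t))) by (apply J_int with N; auto).
  rewrite (RInt_tot_RInt (fun t => J M m G (upd y m t))) by (apply J_int with N; auto).
  replace (fun t => J M m (fun x => F x + G x) (upd y m t)) with (fun t => plus (J M m F (upd y m t)) (J M m G (upd y m t))).
  2:{ extensionality t. rewrite IHm by lia. auto. }
  rewrite (RInt_tot_RInt (fun t => plus (J M m F (upd y m t)) (J M m G (upd y m t))))
    by (apply (ex_RInt_plus (V := R_CompleteNormedModule)); apply J_int with N; auto).
  rewrite (RInt_plus (V := R_CompleteNormedModule)) by (apply J_int with N; auto). reflexivity.
Qed.

Lemma J_scal N M F c m y : 0 < M -> (m <= N)%nat -> Form N F ->
  J M m (fun x => c * F x) y = c * J M m F y.
Proof.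
  intros HM Hm HF. revert y. induction m; intros y; [reflexivity|]; cbn [J].
  rewrite (RInt_tot_RInt (fun t => J M m F (upd y m t))) by (apply J_int with N; auto).
  replace (fun t => J M m (fun x => c * F x) (upd y m t)) with (fun t => scal c (J M m F (upd y m t))).
  2:{ extensionality t. rewrite IHm by lia. auto. }
  rewrite (RInt_tot_RInt (fun t => scal c (J M m F (upd y m t))))
    by (apply (ex_RInt_scal (V := R_CompleteNormedModule)); apply J_int with N; auto).
  rewrite (RInt_scal (V := R_CompleteNormedModule)) by (apply J_int with N; auto). reflexivity.
Qed.

Lemma J_zero M m y : J M m (fun _ => 0) y = 0.
Proof.
  revert y; induction m; intros y; [reflexivity|]; cbn [J].
  replace (fun t => J M m (fun _ => 0) (upd y m t)) with (fun _ : R => 0) by (extensionality t; rewrite IHm; auto).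
  rewrite RInt_tot_RInt by apply ex_RInt_const. rewrite RInt_const. unfold scal; simpl. unfold mult; simpl. ring.
Qed.

Lemma FormH_plus N H F G : FormH N H F -> FormH N H G -> FormH N H (fun x => F x + G x).
Proof.
  intros [C1 [H1 E1]] [C2 [H2 E2]]. exists (fun x => C1 x + C2 x). split. apply BUC_plus; auto.
  intros x. rewrite E1, E2. ring.
Qed.
Lemma FormH_zero N H : FormH N H (fun _ => 0).
Proof. exists (fun _ => 0). split. apply BUC_const. intros; ring. Qed.

Lemma FormH_rsum N H n (G : nat -> (nat -> R) -> R) : (forall j, (j < n)%nat -> FormH N H (G j)) ->
  FormH N H (fun x => rsum n (fun j => G j x)).
Proof. induction n; intros HG; simpl. apply FormH_zero. apply FormH_plus. apply IHn; auto. apply HG; lia. Qed.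

Lemma J_rsum N M H n (G : nat -> (nat -> R) -> R) m y : 0 < M -> (m <= N)%nat ->
  (forall j, (j < n)%nat -> FormH N H (G j)) ->
  J M m (fun x => rsum n (fun j => G j x)) y = rsum n (fun j => J M m (G j) y).
Proof.
  intros HM Hm HG. induction n; simpl. apply J_zero.
  rewrite J_plus with (N := N); auto.
  - rewrite IHn; auto.
  - exists H. apply FormH_rsum. auto.
  - exists H. apply HG. lia.
Qed.

Lemma J_mono N M F G m y : 0 < M -> (m <= N)%nat -> Form N F -> Form N G -> (forall x, F x <= G x) ->
  J M m F y <= J M m G y.
Proof.
  intros HM Hm HF HG Hle. revert y. induction m; intros y; [apply Hle|]; cbn [J].
  rewrite !RInt_tot_RInt by (apply J_int with N; auto).
  apply RInt_le; try lra; try (apply J_int with N; auto).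
  intros t _. apply IHm. lia.
Qed.

Definition phi (p : nat -> R) (r : R) (j : nat) (s : R) : R :=
  if Rle_dec (p j - r) s then if Rle_dec s (p j + r) then 1 else 0 else 0.

Fixpoint prodn (n : nat) (g : nat -> R) : R :=
  match n with O => 1 | S n => prodn n g * g n end.

Lemma prodn_ext n f g : (forall j, (j < n)%nat -> f j = g j) -> prodn n f = prodn n g.
Proof. induction n; simpl; intros H; auto. rewrite IHn by (intros; apply H; lia). rewrite H by lia. auto. Qed.

Lemma prodn_upd n (f : nat -> R -> R) y m t : (m < n)%nat ->
  prodn n (fun j => if (m <=? j)%nat then f j (upd y m t j) else 1) =
  prodn n (fun j => if (S m <=? j)%nat then f j (y j) else 1) * f m t.
Proof.
  induction n; intros Hm; [lia|]. cbn [prodn].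
  destruct (Nat.eq_dec n m) as [E|E].
  - subst n.
    rewrite (prodn_ext m (fun j => if (m <=? j)%nat then f j (upd y m t j) else 1) (fun _ => 1))
      by (intros j Hj; replace (m <=? j)%nat with false by (symmetry; apply Nat.leb_gt; lia); auto).
    rewrite (prodn_ext m (fun j => if (S m <=? j)%nat then f j (y j) else 1) (fun _ => 1))
      by (intros j Hj; replace (S m <=? j)%nat with false by (symmetry; apply Nat.leb_gt; lia); auto).
    rewrite Nat.leb_refl, upd_eq. replace (S m <=? m)%nat with false by (symmetry; apply Nat.leb_gt; lia). ring.
  - rewrite IHn by lia. rewrite upd_neq by auto.
    replace (m <=? n)%nat with true by (symmetry; apply Nat.leb_le; lia).
    replace (S m <=? n)%nat with true by (symmetry; apply Nat.leb_le; lia). ring.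
Qed.

Lemma J_box N M (p : nat -> R) r c m y : 0 < M -> 0 < r -> (m <= N)%nat ->
  (forall j, (j < N)%nat -> - M <= p j - r /\ p j + r <= M) ->
  J M m (fun x => c * prodn N (fun j => phi p r j (x j))) y =
  c * (2 * r) ^ m * prodn N (fun j => if (m <=? j)%nat then phi p r j (y j) else 1).
Proof.
  intros HM Hr Hm Hp. revert y. induction m; intros y; cbn [J pow].
  - rewrite (prodn_ext N (fun j => phi p r j (y j)) (fun j => if (0 <=? j)%nat then phi p r j (y j) else 1)); [ring|].
    intros; simpl; auto.
  - set (K := c * (2 * r) ^ m * prodn N (fun j => if (S m <=? j)%nat then phi p r j (y j) else 1)).
    replace (fun t => J M m (fun x => c * prodn N (fun j => phi p r j (x j))) (upd y m t))
      with (fun t => K * phi p r m t).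
    2:{ extensionality t. rewrite IHm by lia. unfold K. rewrite (prodn_upd N (phi p r) y m t) by lia. ring. }
    destruct (Hp m ltac:(lia)) as [Hp1 Hp2].
    destruct (int_piece (fun _ => K) (fun t => K * phi p r m t) (p m - r) (p m + r) M) as [I E]; try lra.
    + intros; apply continuous_const.
    + intros t Ht. unfold phi. destruct Rle_dec; [lra|]. ring.
    + intros t Ht. unfold phi. destruct Rle_dec; [|lra]. destruct Rle_dec; [|lra]. ring.
    + intros t Ht. unfold phi. destruct Rle_dec; [|ring]. destruct Rle_dec; [lra|]. ring.
    + rewrite RInt_tot_RInt by auto. rewrite E. rewrite RInt_const.
      change (scal (p m + r - (p m - r)) K) with ((p m + r - (p m - r)) * K). unfold K. ring.
Qed.

Definition ej (j : nat) : nat -> R := fun i => if (i =? j)%nat then 1 else 0.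
Definition mej (j : nat) : nat -> R := fun i => if (i =? j)%nat then -1 else 0.

Lemma lin_ej N j x : (j < N)%nat -> lin N (ej j) x = x j.
Proof.
  intros Hj. unfold lin. rewrite (rsum_change N _ (fun _ => 0) j Hj). rewrite rsum_zero. unfold ej. rewrite Nat.eqb_refl. ring.
  intros i Hi. unfold ej. apply Nat.eqb_neq in Hi. rewrite Hi. ring.
Qed.
Lemma lin_mej N j x : (j < N)%nat -> lin N (mej j) x = - x j.
Proof.
  intros Hj. unfold lin. rewrite (rsum_change N _ (fun _ => 0) j Hj). rewrite rsum_zero. unfold mej. rewrite Nat.eqb_refl. ring.
  intros i Hi. unfold mej. apply Nat.eqb_neq in Hi. rewrite Hi. ring.
Qed.

Fixpoint boxH (p : nat -> R) (r : R) (n : nat) : list hs :=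
  match n with
  | O => nil
  | S n => (ej n, p n + r) :: (mej n, - (p n - r)) :: boxH p r n
  end.

Lemma indH_box N p r n x : (n <= N)%nat -> indH N (boxH p r n) x = prodn n (fun j => phi p r j (x j)).
Proof.
  induction n; intros Hn; simpl; auto. unfold indH in *. simpl. rewrite IHn by lia.
  unfold indh; simpl. rewrite lin_ej, lin_mej by lia. unfold phi.
  repeat destruct Rle_dec; try ring; exfalso; lra.
Qed.

Lemma Form_box N p r c : Form N (fun x => c * prodn N (fun j => phi p r j (x j))).
Proof.
  exists (boxH p r N), (fun _ => c). split. apply BUC_const. intros x. rewrite indH_box by lia. ring.
Qed.

Definition glue m (x y : nat -> R) := fun j => if (j <? m)%nat then x j else y j.

Lemma J_int_box M m F y : J M m F y = int_box M m (fun x => F (glue m x y)).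
Proof.
  revert F y; induction m; intros F y; cbn [J int_box].
  - reflexivity.
  - apply (f_equal (fun h => RInt_tot h (-M) M)). extensionality t. rewrite IHm. f_equal. extensionality x. f_equal.
    extensionality j. unfold glue, upd. destruct (Nat.ltb_spec j m); destruct (Nat.eqb_spec j m); destruct (Nat.ltb_spec j (S m)); auto; lia.
Qed.

Lemma int_box_J M d F : (forall x x', (forall j, (j < d)%nat -> x j = x' j) -> F x = F x') ->
  int_box M d F = J M d F (fun _ => 0).
Proof.
  intros HF. rewrite J_int_box. f_equal. extensionality x. apply HF. intros j Hj. unfold glue.
  destruct (Nat.ltb_spec j d); auto; lia.
Qed.


Definition Bary d (V : nat -> nat -> R) (c0 : nat -> R) (c : nat -> nat -> R) :=
  (forall l m, (l <= d)%nat -> (m <= d)%nat -> aff (c0 l) (c l) d (V m) = if Nat.eqb l m then 1 else 0) /\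
  (forall x, rsum (S d) (fun l => aff (c0 l) (c l) d x) = 1) /\
  (forall x j, (j < d)%nat -> rsum (S d) (fun l => aff (c0 l) (c l) d x * V l j) = x j).

Lemma rsum_swap a b (f : nat -> nat -> R) :
  rsum a (fun i => rsum b (fun j => f i j)) = rsum b (fun j => rsum a (fun i => f i j)).
Proof.
  induction a; simpl. rewrite rsum_zero. auto. rewrite IHa. rewrite <- rsum_plus. auto.
Qed.

Lemma rsum_delta n m (f : nat -> R) : (m < n)%nat -> rsum n (fun l => f l * (if Nat.eqb m l then 1 else 0)) = f m.
Proof.
  intros Hm. rewrite (rsum_change n _ (fun _ => 0) m Hm). rewrite rsum_zero, Nat.eqb_refl. ring.
  intros j Hj. destruct (Nat.eqb_spec m j); [lia|]. ring.
Qed.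

Lemma aff_local c0 c d x y : (forall j, (j < d)%nat -> x j = y j) -> aff c0 c d x = aff c0 c d y.
Proof. intros H. unfold aff. f_equal. apply rsum_ext. intros j Hj. rewrite H; auto. Qed.

Lemma aff_comb c0 c d n (V : nat -> nat -> R) (mu : nat -> R) : rsum n mu = 1 ->
  aff c0 c d (fun j => rsum n (fun m => mu m * V m j)) = rsum n (fun m => mu m * aff c0 c d (V m)).
Proof.
  intros Hs. unfold aff.
  rewrite (rsum_ext n _ (fun m => mu m * c0 + rsum d (fun j => mu m * (c j * V m j)))).
  2:{ intros; rewrite rsum_scal. ring. }
  rewrite rsum_plus. rewrite (rsum_ext n (fun m => mu m * c0) (fun m => c0 * mu m)) by (intros; ring).
  rewrite rsum_scal, Hs. f_equal. ring.
  rewrite rsum_swap. apply rsum_ext. intros j Hj. rewrite <- rsum_scal. apply rsum_ext. intros; ring.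
Qed.

Lemma aff_shift c0 c d x s (a b : nat -> R) :
  aff c0 c d (fun j => x j - s * (a j - b j)) = aff c0 c d x - s * (aff c0 c d a - aff c0 c d b).
Proof.
  unfold aff. rewrite (rsum_ext d _ (fun j => c j * x j - s * (c j * a j) + s * (c j * b j))) by (intros; ring).
  rewrite rsum_plus, rsum_minus, !rsum_scal. ring.
Qed.

Lemma lam_simplex d V c0 c x : Bary d V c0 c -> in_simplex d V x -> forall l, (l <= d)%nat -> 0 <= aff (c0 l) (c l) d x.
Proof.
  intros [B1 [B2 B3]] [mu [Hmu [Hs Hx]]] l Hl.
  rewrite (aff_local _ _ d x (fun j => rsum (S d) (fun m => mu m * V m j))) by auto.
  rewrite aff_comb by auto.
  rewrite (rsum_ext (S d) _ (fun m => mu m * (if Nat.eqb l m then 1 else 0))).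
  2:{ intros m Hm. rewrite B1 by lia. auto. }
  replace (aff (c0 l) (c l) d x) with (aff (c0 l) (c l) d (fun j => rsum (S d) (fun m => mu m * V m j))) by (apply aff_local; intros; rewrite Hx; auto).
  rewrite rsum_delta by lia. apply Hmu; auto.
Qed.

Lemma face_of_lam d V c0 c i x : Bary d V c0 c -> (i <= d)%nat ->
  (forall l, (l <= d)%nat -> 0 <= aff (c0 l) (c l) d x) -> aff (c0 i) (c i) d x = 0 -> in_face d V i x.
Proof.
  intros [B1 [B2 B3]] Hi Hpos Hzero. exists (fun l => aff (c0 l) (c l) d x). repeat split; auto.
  intros j Hj. rewrite B3; auto.
Qed.

Lemma simplex_of_lam d V c0 c x : Bary d V c0 c ->
  (forall l, (l <= d)%nat -> 0 <= aff (c0 l) (c l) d x) -> in_simplex d V x.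
Proof.
  intros [B1 [B2 B3]] Hpos. exists (fun l => aff (c0 l) (c l) d x). repeat split; auto.
  intros j Hj. rewrite B3; auto.
Qed.

(* the halfspace description of K *)
Definition HK d (c0 : nat -> R) (c : nat -> nat -> R) : list hs :=
  map (fun l => ((fun j => - c l j), c0 l)) (seq 0 (S d)).

Lemma indh_lam d (c0 : nat -> R) (c : nat -> nat -> R) l x : indh d ((fun j => - c l j), c0 l) x = if Rle_dec 0 (aff (c0 l) (c l) d x) then 1 else 0.
Proof.
  unfold indh, aff, lin. simpl. rewrite (rsum_ext d _ (fun j => -1 * (c l j * x j))) by (intros; ring).
  rewrite rsum_scal. destruct Rle_dec; destruct Rle_dec; auto; lra.
Qed.

Lemma indH_seq d (c0 : nat -> R) (c : nat -> nat -> R) x n s :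
  indH d (map (fun l => ((fun j => - c l j), c0 l)) (seq s n)) x =
  if excluded_middle_informative (forall l, (s <= l < s + n)%nat -> 0 <= aff (c0 l) (c l) d x) then 1 else 0.
Proof.
  revert s; induction n; intros s; simpl.
  - destruct excluded_middle_informative; auto. exfalso. apply n. intros; lia.
  - unfold indH in *. simpl. rewrite IHn. rewrite indh_lam.
    destruct Rle_dec as [r|n0]; destruct excluded_middle_informative as [A|A]; destruct excluded_middle_informative as [B|B]; try ring; exfalso.
    all: first [ apply B; intros l Hl; destruct (Nat.eq_dec l s) as [->|]; auto; apply A; lia
               | apply A; intros; apply B; lia
               | apply n0; apply B; lia ].
Qed.

Lemma indK_HK d V c0 c x : Bary d V c0 c -> indK d V x = indH d (HK d c0 c) x.
Proof.
  intros HB. unfold HK. rewrite indH_seq. unfold indK.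
  destruct excluded_middle_informative as [A|A]; destruct excluded_middle_informative as [B|B]; auto.
  - exfalso. apply B. intros l Hl. apply (lam_simplex d V c0 c x HB A). lia.
  - exfalso. apply A. apply (simplex_of_lam d V c0 c x HB). intros l Hl. apply B. lia.
Qed.

Lemma indH_local N H x y : (forall j, (j < N)%nat -> x j = y j) -> indH N H x = indH N H y.
Proof.
  intros E. induction H; simpl; auto. unfold indH in *. simpl. rewrite IHlist. f_equal.
  unfold indh, lin. rewrite (rsum_ext N _ (fun j => fst a j * y j)); auto. intros; rewrite E; auto.
Qed.

Lemma single_le_rsum n f m : (forall j, (j < n)%nat -> 0 <= f j) -> (m < n)%nat -> f m <= rsum n f.
Proof.
  intros H Hm. rewrite (rsum_change n f (fun j => if Nat.eqb j m then 0 else f j) m Hm).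
  - rewrite Nat.eqb_refl. assert (0 <= rsum n (fun j => if Nat.eqb j m then 0 else f j)).
    { apply rsum_nonneg. intros j Hj. destruct Nat.eqb; [lra|auto]. } lra.
  - intros j Hj. apply Nat.eqb_neq in Hj. rewrite Hj. auto.
Qed.

Lemma simplex_bound d V x : in_simplex d V x -> forall j, (j < d)%nat -> Rabs (x j) < Defs.bound d V.
Proof.
  intros [mu [Hmu [Hs Hx]]] j Hj. rewrite Hx by auto. unfold Defs.bound.
  eapply Rle_lt_trans. apply rsum_abs.
  apply Rle_lt_trans with (rsum (S d) (fun i => rsum d (fun j => Rabs (V i j)))); [|lra].
  apply rsum_le. intros i Hi. rewrite Rabs_mult.
  assert (mu i <= 1).
  { rewrite <- Hs. apply single_le_rsum; auto. intros; apply Hmu; lia. }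
  rewrite Rabs_right by (apply Rle_ge; apply Hmu; lia).
  apply Rle_trans with (Rabs (V i j)).
  - assert (0 <= Rabs (V i j)) by apply Rabs_pos. assert (0 <= mu i) by (apply Hmu; lia). nra.
  - apply (single_le_rsum d (fun j => Rabs (V i j))); auto. intros; apply Rabs_pos.
Qed.

Lemma bound_pos d V : 0 < Defs.bound d V.
Proof.
  unfold Defs.bound. assert (0 <= rsum (S d) (fun i => rsum d (fun j => Rabs (V i j)))); [|lra].
  apply rsum_nonneg. intros. apply rsum_nonneg. intros. apply Rabs_pos.
Qed.


Lemma poly_aff e d c0 c : (d <= e)%nat -> is_poly e 1 (fun z => aff c0 c d z).
Proof.
  intros Hd. unfold aff. apply poly_add.
  - apply poly_mono with 0%nat; [lia|]. apply poly_const.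
  - apply poly_rsum. intros j Hj. apply poly_scal. apply poly_coord. lia.
Qed.

Lemma prev_poly d k v : is_poly_prev d k v -> exists k', is_poly d k' v.
Proof.
  destruct k; simpl; intros H.
  - exists 0%nat. apply poly_ext with (fun _ => 0). apply poly_zero. intros; auto.
  - exists k; auto.
Qed.

Lemma rsum_const n a : rsum n (fun _ => a) = INR n * a.
Proof. induction n; simpl; [ring|]. rewrite IHn. destruct n; simpl; ring. Qed.

Lemma prodn_one n : prodn n (fun _ => 1) = 1.
Proof. induction n; simpl; auto. rewrite IHn; ring. Qed.

Lemma prodn01 n g : (forall j, (j < n)%nat -> g j = 0 \/ g j = 1) ->
  prodn n g = 0 \/ (prodn n g = 1 /\ forall j, (j < n)%nat -> g j = 1).
Proof.
  induction n; intros H; simpl. right; split; auto; intros; lia.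
  destruct IHn as [E|[E1 E2]]. intros; apply H; lia.
  - left. rewrite E. ring.
  - destruct (H n ltac:(lia)) as [F|F]; rewrite F, E1.
    + left; ring.
    + right. split. ring. intros j Hj. destruct (Nat.eq_dec j n) as [->|]; auto. apply E2. lia.
Qed.

Lemma phi01 p r j s : phi p r j s = 0 \/ phi p r j s = 1.
Proof. unfold phi. repeat destruct Rle_dec; auto. Qed.

Lemma clip_id M v : Rabs v < M -> Rmax (- M) (Rmin M v) = v.
Proof. intros H. apply Rabs_def2 in H. unfold Rmax, Rmin. repeat destruct Rle_dec; lra. Qed.

Lemma interior d V c0 c : (1 <= d)%nat -> Bary d V c0 c ->
  exists xb rho kap, 0 < rho /\ 0 < kap /\ forall y, (forall j, (j < d)%nat -> Rabs (y j - xb j) <= 2 * rho) ->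
    forall l, (l <= d)%nat -> kap <= aff (c0 l) (c l) d y.
Proof.
  intros Hd HB. remember (INR (S d)) as n eqn:En. assert (Hn : 0 < n) by (rewrite En; apply lt_0_INR; lia).
  set (xb := fun j => rsum (S d) (fun m => / n * V m j)).
  remember (rsum (S d) (fun l => rsum d (fun j => Rabs (c l j)))) as Sc eqn:ESc.
  assert (HSc : 0 <= Sc) by (rewrite ESc; apply rsum_nonneg; intros; apply rsum_nonneg; intros; apply Rabs_pos).
  exists xb, (1 / (4 * n * (Sc + 1))), (1 / (2 * n)). split; [|split].
  - apply Rdiv_lt_0_compat; [lra|]. apply Rmult_lt_0_compat; lra.
  - apply Rdiv_lt_0_compat; lra.
  - intros y Hy l Hl. destruct HB as [B1 [B2 B3]].
    assert (Hxb : aff (c0 l) (c l) d xb = / n).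
    { unfold xb. rewrite aff_comb.
      - rewrite (rsum_ext (S d) _ (fun m => / n * (if Nat.eqb l m then 1 else 0))) by (intros; rewrite B1 by lia; auto).
        apply rsum_delta. lia.
      - rewrite rsum_const. rewrite <- En. field. lra. }
    assert (Hdev : Rabs (aff (c0 l) (c l) d y - aff (c0 l) (c l) d xb) <= Sc * (2 * (1 / (4 * n * (Sc + 1))))).
    { unfold aff. replace (c0 l + rsum d (fun j => c l j * y j) - (c0 l + rsum d (fun j => c l j * xb j)))
        with (rsum d (fun j => c l j * (y j - xb j))) by (rewrite (rsum_ext d _ (fun j => c l j * y j - c l j * xb j)) by (intros; ring); rewrite rsum_minus; ring).
      eapply Rle_trans. apply rsum_abs.
      apply Rle_trans with (rsum d (fun j => Rabs (c l j) * (2 * (1 / (4 * n * (Sc + 1)))))).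
      - apply rsum_le. intros j Hj. rewrite Rabs_mult. apply Rmult_le_compat_l. apply Rabs_pos. apply Hy; auto.
      - rewrite (rsum_ext d _ (fun j => (2 * (1 / (4 * n * (Sc + 1)))) * Rabs (c l j))) by (intros; ring).
        rewrite rsum_scal. rewrite Rmult_comm. apply Rmult_le_compat_r.
        + apply Rmult_le_pos; [lra|]. left. apply Rdiv_lt_0_compat; [lra|]. apply Rmult_lt_0_compat; lra.
        + rewrite ESc. apply (single_le_rsum (S d) (fun l => rsum d (fun j => Rabs (c l j)))). intros; apply rsum_nonneg; intros; apply Rabs_pos. lia. }
    assert (E : Sc * (2 * (1 / (4 * n * (Sc + 1)))) <= 1 / (2 * n)).
    { apply Rmult_le_reg_r with (4 * n * (Sc + 1)). apply Rmult_lt_0_compat; lra.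
      field_simplify; try lra; try nra. }
    assert (G := Rle_abs (- (aff (c0 l) (c l) d y - aff (c0 l) (c l) d xb))). rewrite Rabs_Ropp in G.
    assert (F : 1 / (2 * n) = / n - 1 / (2 * n)) by (field; lra).
    rewrite Hxb in G, Hdev. lra.
Qed.

Lemma decomp d k u (c0i : R) (ci : nat -> R) (e : nat -> R) : is_poly d k u ->
  exists w, is_poly_prev d k w /\ forall x, u x = u (fun j => x j - aff c0i ci d x * e j) + aff c0i ci d x * w x.
Proof.
  intros Hu.
  set (phiG := fun j (z : nat -> R) => z j - aff c0i ci d z * e j + z d * e j).
  assert (HG : is_poly (S d) k (fun z => u (fun j => phiG j z))).
  { apply poly_comp with d; auto. intros j Hj. unfold phiG. apply poly_add. apply poly_add.
    - apply poly_coord. lia.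
    - apply poly_ext with (fun z => (- e j) * aff c0i ci d z). apply poly_scal. apply poly_aff. lia. intros; ring.
    - apply poly_ext with (fun z => e j * z d). apply poly_scal. apply poly_coord. lia. intros; ring. }
  destruct (poly_split (S d) k _ d HG) as [W [HW EW]].
  exists (fun x => W (upd x d (aff c0i ci d x))). split.
  - destruct k as [|j].
    + intros x. apply HW.
    + simpl. apply poly_ext with (fun x => W (fun m => if (m <? d)%nat then x m else aff c0i ci d x)).
      * apply poly_comp with (S d); auto. intros m Hm. destruct (Nat.ltb_spec m d).
        -- apply poly_coord; auto.
        -- apply poly_aff; lia.
      * intros x. apply poly_local with (S d) j; auto. intros m Hm. unfold upd.
        destruct (Nat.ltb_spec m d); destruct (Nat.eqb_spec m d); auto; lia.
  - intros x. specialize (EW (upd x d (aff c0i ci d x))).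
    rewrite upd_eq, upd_upd in EW.
    assert (A : forall t, aff c0i ci d (upd x d t) = aff c0i ci d x).
    { intros t. apply aff_local. intros j Hj. rewrite upd_neq by lia. auto. }
    assert (E1 : u (fun j => phiG j (upd x d (aff c0i ci d x))) = u x).
    { apply poly_local with d k; auto. intros j Hj. unfold phiG. rewrite A, upd_eq, upd_neq by lia. ring. }
    assert (E2 : u (fun j => phiG j (upd x d 0)) = u (fun j => x j - aff c0i ci d x * e j)).
    { apply poly_local with d k; auto. intros j Hj. unfold phiG. rewrite A, upd_eq, upd_neq by lia. ring. }
    rewrite E1, E2 in EW. exact EW.
Qed.

Lemma part_a d V c0 c k u i : (1 <= d)%nat -> Bary d V c0 c -> Pperp d V k u -> (i <= d)%nat ->
  (forall x, in_face d V i x -> u x = 0) -> forall x, u x = 0.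
Proof.
  intros Hd HB [Hu Horth] Hi Hface.
  set (o := if Nat.eqb i 0 then 1%nat else 0%nat).
  assert (Ho : (o <= d)%nat /\ o <> i) by (unfold o; destruct (Nat.eqb_spec i 0); lia).
  destruct Ho as [Ho1 Ho2].
  set (lam := fun l x => aff (c0 l) (c l) d x).
  destruct (decomp d k u (c0 i) (c i) (fun j => V i j - V o j) Hu) as [w [Hw Ew]].
  assert (OnK : forall x, in_simplex d V x -> u x = lam i x * w x).
  { intros x Hx. rewrite Ew. rewrite Hface. unfold lam; ring.
    assert (P := lam_simplex d V c0 c x HB Hx). assert (B1 := proj1 HB).
    apply face_of_lam with c0 c; auto.
    - intros l Hl. rewrite aff_shift. rewrite !B1 by auto.
      assert (Pl := P l Hl). assert (Pi := P i Hi).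
      destruct (Nat.eqb_spec l i) as [Eli|Eli]; destruct (Nat.eqb_spec l o) as [Elo|Elo].
      + lia.
      + subst l. lra.
      + subst l. lra.
      + lra.
    - rewrite aff_shift. rewrite !B1 by auto. rewrite Nat.eqb_refl.
      replace (Nat.eqb i o) with false by (symmetry; apply Nat.eqb_neq; auto). ring. }
  destruct (prev_poly d k w Hw) as [kw Hkw].
  set (M := Defs.bound d V). assert (HM : 0 < M) by apply bound_pos.
  set (PW := fun x => lam i x * (w x * w x)).
  assert (HPW : is_poly d (1 + (kw + kw)) PW).
  { unfold PW. apply poly_mul. apply poly_aff. lia. apply poly_mul; auto. }
  assert (Bd : forall x, in_simplex d V x -> PW (clip M x) = PW x).
  { intros x Hx. apply poly_local with d (1 + (kw + kw))%nat; auto. intros j Hj. unfold clip.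
    apply clip_id. apply simplex_bound; auto. }
  set (FK := fun x => indK d V x * PW (clip M x)).
  assert (HFK_eq : forall x, indK d V x * (u x * w x) = FK x).
  { intros x. unfold FK, indK. destruct excluded_middle_informative as [Hx|Hx]; [|ring].
    rewrite Bd, OnK by auto. unfold PW. ring. }
  assert (HFK_form : Form d FK).
  { exists (HK d c0 c), (fun x => PW (clip M x)). split. apply BUC_poly_clip with (1 + (kw + kw))%nat; auto.
    intros x. unfold FK. rewrite (indK_HK d V c0 c x HB). auto. }
  assert (HJ0 : J M d FK (fun _ => 0) = 0).
  { rewrite <- int_box_J.
    - rewrite <- (Horth w Hw). unfold ipK. fold M. f_equal. extensionality x. symmetry; apply HFK_eq.
    - intros x x' E. unfold FK. rewrite !(indK_HK d V c0 c _ HB). rewrite (indH_local d _ x x' E). f_equal.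
      apply poly_local with d (1 + (kw + kw))%nat; auto. intros j Hj. unfold clip. rewrite E; auto. }
  destruct (interior d V c0 c Hd HB) as [xb [rho [kap [Hrho [Hkap Hint]]]]].
  assert (InK : forall y, (forall j, (j < d)%nat -> Rabs (y j - xb j) <= 2 * rho) -> in_simplex d V y).
  { intros y Hy. apply (simplex_of_lam d V c0 c y HB). intros l Hl. specialize (Hint y Hy l Hl). lra. }
  assert (Bnd : forall y, (forall j, (j < d)%nat -> Rabs (y j - xb j) <= 2 * rho) -> forall j, (j < d)%nat -> Rabs (y j) < M).
  { intros y Hy j Hj. apply simplex_bound; auto. }
  assert (Hw0 : forall y0, (forall j, (j < d)%nat -> Rabs (y0 j - xb j) <= rho) -> w y0 = 0).
  { intros y0 Hy0. destruct (Req_dec (w y0) 0) as [|Hne]; auto. exfalso.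
    assert (Heps : 0 < Rabs (w y0) / 2) by (assert (0 < Rabs (w y0)) by (apply Rabs_pos_lt; auto); lra).
    destruct (BUC_poly_clip d kw w M Hkw) as [_ Uw]. destruct (Uw _ Heps) as [del [Hdel Fw]].
    set (r1 := Rmin rho (del / 2)).
    assert (Hr1 : 0 < r1) by (apply Rmin_pos; lra).
    assert (Hr1a : r1 <= rho) by apply Rmin_l.
    assert (Hr1b : r1 < del) by (unfold r1; eapply Rle_lt_trans; [apply Rmin_r|lra]).
    assert (Near : forall y, (forall j, (j < d)%nat -> Rabs (y j - y0 j) <= r1) -> forall j, (j < d)%nat -> Rabs (y j - xb j) <= 2 * rho).
    { intros y Hy j Hj. replace (y j - xb j) with ((y j - y0 j) + (y0 j - xb j)) by ring.
      eapply Rle_trans. apply Rabs_triang. specialize (Hy j Hj). specialize (Hy0 j Hj). lra. }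
    assert (Hy0K : forall j, (j < d)%nat -> Rabs (y0 j - xb j) <= 2 * rho) by (intros j Hj; specialize (Hy0 j Hj); lra).
    set (cst := kap * (w y0 * w y0 / 4)).
    assert (Hcst : 0 < cst) by (unfold cst; assert (0 < w y0 * w y0) by (apply Rsqr_pos_lt; auto); nra).
    set (Fb := fun x => cst * prodn d (fun j => phi y0 r1 j (x j))).
    assert (Hle : forall x, Fb x <= FK x).
    { intros x. unfold Fb. destruct (prodn01 d (fun j => phi y0 r1 j (x j))) as [E|[E1 E2]].
      - intros; apply phi01.
      - rewrite E. unfold FK, indK. destruct excluded_middle_informative as [Hx|Hx]; [|lra].
        rewrite Bd by auto. unfold PW.
        assert (0 <= lam i x) by (apply (lam_simplex d V c0 c x HB Hx); auto).
        assert (0 <= w x * w x) by nra. nra.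
      - rewrite E1. assert (Hbox : forall j, (j < d)%nat -> Rabs (x j - y0 j) <= r1).
        { intros j Hj. specialize (E2 j Hj). unfold phi in E2. apply Rabs_le.
          repeat destruct Rle_dec in E2; lra. }
        assert (HxK := InK x (Near x Hbox)).
        unfold FK, indK. destruct excluded_middle_informative as [_|Hx]; [|contradiction].
        rewrite Bd by auto. unfold PW.
        assert (Hl : kap <= lam i x) by (apply Hint; auto; apply Near; auto).
        assert (Hc : Rabs (w (clip M x) - w (clip M y0)) < Rabs (w y0) / 2).
        { apply Fw. intros j Hj. specialize (Hbox j Hj). lra. }
        assert (C1 : w (clip M x) = w x).
        { apply poly_local with d kw; auto. intros j Hj. unfold clip. apply clip_id. apply (Bnd x); auto. }
        assert (C2 : w (clip M y0) = w y0).
        { apply poly_local with d kw; auto. intros j Hj. unfold clip. apply clip_id. apply (Bnd y0); auto. }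
        rewrite C1, C2 in Hc.
        assert (Q : Rabs (w y0) / 2 <= Rabs (w x)).
        { assert (T := Rabs_triang_inv (w y0) (w x)). rewrite Rabs_minus_sym in Hc. lra. }
        assert (A1 : Rabs (w x) * Rabs (w x) = w x * w x) by (rewrite <- Rabs_mult; apply Rabs_right; nra).
        assert (A2 : Rabs (w y0) * Rabs (w y0) = w y0 * w y0) by (rewrite <- Rabs_mult; apply Rabs_right; nra).
        assert (Q2 : w y0 * w y0 / 4 <= w x * w x).
        { rewrite <- A1, <- A2. assert (0 <= Rabs (w y0)) by apply Rabs_pos. nra. }
        unfold cst. assert (0 <= w y0 * w y0) by nra. nra. }
    assert (HJb : J M d Fb (fun _ => 0) = cst * (2 * r1) ^ d).
    { unfold Fb. rewrite J_box with (N := d); auto.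
      - rewrite (prodn_ext d _ (fun _ => 1)). rewrite prodn_one. ring.
        intros j Hj. replace (d <=? j)%nat with false by (symmetry; apply Nat.leb_gt; lia). auto.
      - intros j Hj.
        assert (U1 := Bnd (upd y0 j (y0 j - r1))). assert (U2 := Bnd (upd y0 j (y0 j + r1))).
        assert (G : forall s, Rabs s <= r1 -> forall m, (m < d)%nat -> Rabs (upd y0 j (y0 j + s) m - xb m) <= 2 * rho).
        { intros s Hs m Hm. destruct (Nat.eq_dec m j) as [->|Hmj].
          - rewrite upd_eq. replace (y0 j + s - xb j) with (s + (y0 j - xb j)) by ring.
            eapply Rle_trans. apply Rabs_triang. specialize (Hy0 j Hm). lra.
          - rewrite upd_neq by auto. apply Hy0K; auto. }
        assert (V1 := U2 (G r1 ltac:(rewrite Rabs_right; lra)) j Hj). rewrite upd_eq in V1.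
        assert (G2 := G (- r1) ltac:(rewrite Rabs_Ropp, Rabs_right; lra)).
        replace (y0 j + - r1) with (y0 j - r1) in G2 by ring.
        assert (V2 := U1 G2 j Hj). rewrite upd_eq in V2.
        apply Rabs_def2 in V1. apply Rabs_def2 in V2. lra. }
    assert (Hmono := J_mono d M Fb FK d (fun _ => 0) HM (le_n d) (Form_box d y0 r1 cst) HFK_form Hle).
    rewrite HJb, HJ0 in Hmono.
    assert (0 < (2 * r1) ^ d) by (apply pow_lt; lra). nra. }
  assert (Hwz : forall x, w x = 0) by (apply poly_box_zero with d kw xb rho; auto).
  apply poly_box_zero with d k xb rho; auto.
  intros x Hx. rewrite OnK. rewrite Hwz. ring.
  apply InK. intros j Hj. specialize (Hx j Hj). lra.
Qed.


Lemma aff_diff c0 (c : nat -> R) d a b : rsum d (fun j => c j * (a j - b j)) = aff c0 c d a - aff c0 c d b.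
Proof. unfold aff. rewrite (rsum_ext d _ (fun j => c j * a j - c j * b j)) by (intros; ring). rewrite rsum_minus. ring. Qed.

Lemma normal_exists d V c0 c l : (1 <= d)%nat -> Bary d V c0 c -> (l <= d)%nat ->
  0 < dot d (c l) (c l) /\
  outward_unit_normal d V l (fun j => - c l j / sqrt (dot d (c l) (c l))).
Proof.
  intros Hd HB Hl. destruct HB as [B1 _].
  set (o := if Nat.eqb l 0 then 1%nat else 0%nat).
  assert (Ho : (o <= d)%nat /\ o <> l) by (unfold o; destruct (Nat.eqb_spec l 0); lia). destruct Ho as [Ho1 Ho2].
  set (D := dot d (c l) (c l)).
  assert (HD0 : 0 <= D) by (unfold D, dot; apply rsum_nonneg; intros; nra).
  assert (HD : 0 < D).
  { destruct HD0 as [|HD0]; auto. exfalso.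
    assert (Z := rsum_zero_each d (fun j => c l j * c l j) ltac:(intros; nra) (eq_sym HD0)).
    assert (E := aff_diff (c0 l) (c l) d (V l) (V o)). rewrite !B1 in E by auto.
    rewrite Nat.eqb_refl in E. replace (Nat.eqb l o) with false in E by (symmetry; apply Nat.eqb_neq; auto).
    rewrite (rsum_ext d _ (fun _ => 0)) in E. rewrite rsum_zero in E. lra.
    intros j Hj. specialize (Z j Hj). simpl in Z. assert (c l j = 0) by nra. rewrite H. ring. }
  set (s := sqrt D). assert (Hs : 0 < s) by (apply sqrt_lt_R0; auto).
  assert (Hss : s * s = D) by (apply sqrt_sqrt; lra).
  split; auto. split; [|split].
  - unfold dot. rewrite (rsum_ext d _ (fun j => / (s * s) * (c l j * c l j))) by (intros; field; lra).
    rewrite rsum_scal. fold (dot d (c l) (c l)). fold D. rewrite Hss. field. lra.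
  - intros j l' Hj Hl' Hjl Hl'l. unfold dot.
    rewrite (rsum_ext d _ (fun k => (- / s) * (c l k * (V j k - V l' k)))) by (intros; field; lra).
    rewrite rsum_scal, aff_diff with (c0 := c0 l). rewrite !B1 by auto.
    replace (Nat.eqb l j) with false by (symmetry; apply Nat.eqb_neq; auto).
    replace (Nat.eqb l l') with false by (symmetry; apply Nat.eqb_neq; auto). ring.
  - intros j Hj Hjl. unfold dot.
    rewrite (rsum_ext d _ (fun k => (- / s) * (c l k * (V l k - V j k)))) by (intros; field; lra).
    rewrite rsum_scal, aff_diff with (c0 := c0 l). rewrite !B1 by auto. rewrite Nat.eqb_refl.
    replace (Nat.eqb l j) with false by (symmetry; apply Nat.eqb_neq; auto).
    assert (0 < / s) by (apply Rinv_0_lt_compat; auto). lra.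
Qed.

Lemma Form_K d V c0 c P kP : Bary d V c0 c -> is_poly d kP P ->
  FormH d (HK d c0 c) (fun x => indK d V x * P x).
Proof.
  intros HB HP. exists (fun x => P (clip (Defs.bound d V) x)). split. apply BUC_poly_clip with kP; auto.
  intros x. rewrite <- (indK_HK d V c0 c x HB). unfold indK. destruct excluded_middle_informative as [Hx|Hx]; [|ring].
  f_equal. apply poly_local with d kP; auto. intros j Hj. unfold clip. rewrite clip_id; auto. apply simplex_bound; auto.
Qed.

Lemma ipK_J d V c0 c P kP : Bary d V c0 c -> is_poly d kP P ->
  int_box (Defs.bound d V) d (fun x => indK d V x * P x) = J (Defs.bound d V) d (fun x => indK d V x * P x) (fun _ => 0).
Proof.
  intros HB HP. apply int_box_J. intros x x' E. rewrite !(indK_HK d V c0 c _ HB). rewrite (indH_local d _ x x' E).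
  f_equal. apply poly_local with d kP; auto.
Qed.

Lemma part_b d V c0 c k (q : nat -> (nat -> R) -> R) : (1 <= d)%nat -> Bary d V c0 c ->
  (forall j, (j < d)%nat -> Pperp d V k (q j)) ->
  (forall i, (i <= d)%nat -> forall n, outward_unit_normal d V i n ->
        forall x, in_face d V i x -> dot d (fun j => q j x) n = 0) ->
  forall j, (j < d)%nat -> forall x, q j x = 0.
Proof.
  intros Hd HB Hq Hn.
  set (M := Defs.bound d V). assert (HM : 0 < M) by apply bound_pos.
  assert (Hul : forall l, (l <= d)%nat -> forall x, rsum d (fun j => c l j * q j x) = 0).
  { intros l Hl. apply (part_a d V c0 c k _ l Hd HB); auto.
    - split.
      + apply poly_rsum. intros j Hj. apply poly_scal. apply (Hq j Hj).
      + intros v Hv. destruct (prev_poly d k v Hv) as [kv Hkv].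
        assert (Pq : forall j, (j < d)%nat -> is_poly d (k + kv) (fun x => q j x * v x)).
        { intros j Hj. apply poly_mul; auto. apply (Hq j Hj). }
        unfold ipK.
        replace (fun x => indK d V x * (rsum d (fun j => c l j * q j x) * v x))
          with (fun x => rsum d (fun j => indK d V x * (c l j * (q j x * v x)))).
        2:{ extensionality x. rewrite (rsum_ext d _ (fun j => (indK d V x * v x) * (c l j * q j x))) by (intros; ring).
            rewrite rsum_scal. ring. }
        rewrite int_box_J.
        2:{ intros x x' E. apply rsum_ext. intros j Hj. rewrite !(indK_HK d V c0 c _ HB). rewrite (indH_local d _ x x' E).
            f_equal. f_equal. apply (poly_local d (k + kv) (fun x => q j x * v x)); auto. }
        rewrite J_rsum with (N := d) (H := HK d c0 c); auto.
        2:{ intros j Hj. apply Form_K with (k + kv)%nat; auto. apply poly_scal; auto. }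
        rewrite (rsum_ext d _ (fun _ => 0)). apply rsum_zero.
        intros j Hj.
        rewrite (J_ext _ _ _ (fun x => c l j * (indK d V x * (q j x * v x)))) by (intros; ring).
        rewrite J_scal with (N := d); auto.
        2:{ exists (HK d c0 c). apply Form_K with (k + kv)%nat; auto. }
        rewrite <- (ipK_J d V c0 c _ (k + kv)%nat HB (Pq j Hj)).
        destruct (Hq j Hj) as [_ Ho]. specialize (Ho v Hv). unfold ipK in Ho. unfold M in *. rewrite Ho. ring.
    - intros x Hx. destruct (normal_exists d V c0 c l Hd HB Hl) as [HD Hnor].
      specialize (Hn l Hl _ Hnor x Hx).
      remember (sqrt (dot d (c l) (c l))) as s eqn:Es.
      assert (Hs : 0 < s) by (rewrite Es; apply sqrt_lt_R0; auto).
      unfold dot in Hn.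
      rewrite (rsum_ext d _ (fun j => (- / s) * (c l j * q j x))) in Hn by (intros; field; lra).
      rewrite rsum_scal in Hn. assert (0 < / s) by (apply Rinv_0_lt_compat; auto). nra. }
  intros j Hj x. destruct HB as [B1 [B2 B3]].
  assert (E1 := B3 (fun m => q m x) j Hj). cbv beta in E1.
  assert (E0 := B3 (fun _ => 0) j Hj). cbv beta in E0.
  rewrite <- E1.
  rewrite (rsum_ext (S d) _ (fun l => aff (c0 l) (c l) d (fun _ => 0) * V l j + rsum d (fun m => c l m * q m x) * V l j)).
  - rewrite rsum_plus, E0. rewrite (rsum_ext (S d) _ (fun _ => 0)). rewrite rsum_zero. ring.
    intros l Hl. rewrite Hul by lia. ring.
  - intros l Hl. unfold aff. rewrite (rsum_ext d (fun m => c l m * 0) (fun _ => 0)) by (intros; ring). rewrite rsum_zero. ring.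
Qed.

Theorem lemma2p1 (d : nat) (V : nat -> nat -> R) (k : nat) :
  (d = 2%nat \/ d = 3%nat) ->
  nondegenerate d V ->
  (* (a) *)
  (forall u : (nat -> R) -> R,
     Pperp d V k u ->
     forall i, (i <= d)%nat ->
     (forall x, in_face d V i x -> u x = 0) ->
     forall x, u x = 0) /\
  (* (b) *)
  (forall q : nat -> (nat -> R) -> R,
     (forall j, (j < d)%nat -> Pperp d V k (q j)) ->
     (forall i, (i <= d)%nat -> forall n, outward_unit_normal d V i n ->
        forall x, in_face d V i x -> dot d (fun j => q j x) n = 0) ->
     forall j, (j < d)%nat -> forall x, q j x = 0).
Proof.
  intros Hd Hnd. assert (Hd1 : (1 <= d)%nat) by lia.
  destruct (LA.bary_exists d V Hnd) as [c0 [c HB]].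
  split.
  - intros u Hu i Hi Hf. apply (part_a d V c0 c k u i Hd1 HB Hu Hi Hf).
  - intros q Hq Hn. apply (part_b d V c0 c k q Hd1 HB Hq Hn).
Qed.
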